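(* Let $(a_j)_{j\in\mathbb{N}_0}$ be a complex sequence with $\sum_{j=0}^\infty|a_j|<\infty$ and let $(b_j)_{j\in\mathbb{N}_0}$ be a strictly increasing sequence of positive reals with $b_j\to\infty$. Set $b_{-1}=0$ and $$\Delta b_j=\min(b_j-b_{j-1},\,b_{j+1}-b_j),\qquad j\ge0.$$ Suppose $a_j\Delta b_j\not\to0$ as $j\to\infty$. Let $f(t)=\sum_{j=0}^\infty a_je^{i b_jt}$. Then $f$ is bounded and continuous on $\mathbb{R}$ but differentiable at no point of $\mathbb{R}$. If in addition $\sup_j|a_j|\Delta b_j=\infty$, then $f$ is not Lipschitz continuous at any $t_0\in\mathbb{R}$. The same conclusions hold for $\operatorname{Re}f$ and $\operatorname{Im}f$.
   Context: A function $g\colon\mathbb{R}\to\mathbb{C}$ is Lipschitz continuous at $t_0$ if there exist constants $L>0$, $\eta>0$ such that $|g(t)-g(t_0)|\le L|t-t_0|$ for all $t\in\,]t_0-\eta,t_0+\eta[$. *)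

(* Defs.v *)
From Stdlib Require Import Reals Lra.
Open Scope R_scope.

Definition Cx : Type := (R * R)%type.
Definition Cre (z : Cx) : R := fst z.
Definition Cim (z : Cx) : R := snd z.
Definition Cadd (z w : Cx) : Cx := (fst z + fst w, snd z + snd w).
Definition Csub (z w : Cx) : Cx := (fst z - fst w, snd z - snd w).
Definition Cmul (z w : Cx) : Cx :=
  (fst z * fst w - snd z * snd w, fst z * snd w + snd z * fst w).
Definition Cscal (r : R) (z : Cx) : Cx := (r * fst z, r * snd z).
Definition Cmod (z : Cx) : R := sqrt (fst z ^ 2 + snd z ^ 2).
Definition Cexpi (theta : R) : Cx := (cos theta, sin theta).

Fixpoint Csum (u : nat -> Cx) (n : nat) : Cx :=
  match n with
  | O => u O
  | S m => Cadd (Csum u m) (u (S m))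
  end.

Definition Ccv (u : nat -> Cx) (l : Cx) : Prop :=
  forall eps, 0 < eps -> exists N, forall n, (n >= N)%nat -> Cmod (Csub (u n) l) < eps.

Definition Cabs_summable (a : nat -> Cx) : Prop :=
  exists l, Un_cv (fun n => sum_f_R0 (fun j => Cmod (a j)) n) l.

(* b_{-1} = 0 convention *)
Definition bprev (b : nat -> R) (j : nat) : R :=
  match j with O => 0 | S k => b k end.
Definition Delta_b (b : nat -> R) (j : nat) : R :=
  Rmin (b j - bprev b j) (b (S j) - b j).

Definition Cbounded (g : R -> Cx) : Prop := exists M, forall t, Cmod (g t) <= M.
Definition Rbounded (g : R -> R) : Prop := exists M, forall t, Rabs (g t) <= M.

Definition Ccontinuous_at (g : R -> Cx) (t0 : R) : Prop :=
  forall eps, 0 < eps -> exists delta, 0 < delta /\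
    forall t, Rabs (t - t0) < delta -> Cmod (Csub (g t) (g t0)) < eps.

Definition Cdifferentiable_at (g : R -> Cx) (t0 : R) : Prop :=
  exists l : Cx, forall eps, 0 < eps -> exists delta, 0 < delta /\
    forall h, h <> 0 -> Rabs h < delta ->
      Cmod (Csub (Cscal (/ h) (Csub (g (t0 + h)) (g t0))) l) < eps.

Definition Clipschitz_at (g : R -> Cx) (t0 : R) : Prop :=
  exists L eta, 0 < L /\ 0 < eta /\
    forall t, t0 - eta < t < t0 + eta -> Cmod (Csub (g t) (g t0)) <= L * Rabs (t - t0).
Definition Rlipschitz_at (g : R -> R) (t0 : R) : Prop :=
  exists L eta, 0 < L /\ 0 < eta /\
    forall t, t0 - eta < t < t0 + eta -> Rabs (g t - g t0) <= L * Rabs (t - t0).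

(* Main.v *)
Require Import Defs.
From Stdlib Require Import Reals Lra Lia.
From Coquelicot Require Import Coquelicot.
Open Scope R_scope.


Lemma Rabs_le_inv a b : Rabs a <= b -> - b <= a <= b.
Proof. unfold Rabs; destruct (Rcase_abs a); lra. Qed.

Lemma div_mul_cancel a c : c <> 0 -> a / c * c = a.
Proof. intros; field; auto. Qed.

Lemma cos_ub_eq x : cos_ub x = 1 - x^2/2 + x^4/24 - x^6/720 + x^8/40320.
Proof.
unfold cos_ub, cos_approx. simpl sum_f_R0. unfold cos_term.
rewrite !INR_IZR_INZ.
change (Z.of_nat (Factorial.fact (2*0))) with 1%Z.
change (Z.of_nat (Factorial.fact (2*1))) with 2%Z.
change (Z.of_nat (Factorial.fact (2*2))) with 24%Z.
change (Z.of_nat (Factorial.fact (2*3))) with 720%Z.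
change (Z.of_nat (Factorial.fact (2*4))) with 40320%Z.
simpl. field.
Qed.

Lemma cos_lb_eq x : cos_lb x = 1 - x^2/2 + x^4/24 - x^6/720.
Proof.
unfold cos_lb, cos_approx. simpl sum_f_R0. unfold cos_term.
rewrite !INR_IZR_INZ.
change (Z.of_nat (Factorial.fact (2*0))) with 1%Z.
change (Z.of_nat (Factorial.fact (2*1))) with 2%Z.
change (Z.of_nat (Factorial.fact (2*2))) with 24%Z.
change (Z.of_nat (Factorial.fact (2*3))) with 720%Z.
simpl. field.
Qed.

Lemma abs_sin_le x : Rabs (sin x) <= Rabs x.
Proof.
assert (H: forall y, 0 <= y -> Rabs (sin y) <= y).
{ intros y Hy. destruct (Req_dec y 0) as [->|Hy0].
  - rewrite sin_0, Rabs_R0; lra.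
  - assert (Hs := sin_lt_x y ltac:(lra)). pose proof (SIN_bound y).
    apply Rabs_le. split; [|lra].
    destruct (Rle_dec 1 y); [lra|].
    assert (0 <= sin y) by (apply sin_ge_0; pose proof PI2_1; lra). lra. }
destruct (Rle_dec 0 x).
- rewrite (Rabs_right x) by lra. apply H; lra.
- replace x with (- - x) by ring. rewrite sin_neg, !Rabs_Ropp.
  rewrite (Rabs_left x) by lra. apply H; lra.
Qed.

Lemma cos_ge x : 1 - x^2/2 <= cos x.
Proof.
replace x with (2 * (x/2)) at 2 by field. rewrite cos_2a_sin.
pose proof (abs_sin_le (x/2)).
assert (sin (x/2) * sin (x/2) <= (x/2)*(x/2)).
{ apply Rsqr_le_abs_1 in H. unfold Rsqr in H. exact H. }
nra.
Qed.

Definition r1 (x : R) : R :=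
  if Req_EM_T x 0 then / 24 else (cos x - 1 + x^2/2) / x^4.

Lemma r1_nz x : x <> 0 -> r1 x = (cos x - 1 + x^2/2) / x^4.
Proof. intros H. unfold r1. destruct (Req_EM_T x 0); [contradiction|reflexivity]. Qed.

Lemma r1_0 : r1 0 = / 24.
Proof. unfold r1. destruct (Req_EM_T 0 0); [reflexivity|contradiction]. Qed.

Lemma x4_pos x : x <> 0 -> 0 < x^4.
Proof. intros H. replace (x^4) with ((x*x)*(x*x)) by ring.
  assert (0 < x*x) by (apply Rsqr_pos_lt; exact H). nra. Qed.

Lemma cos_bounds_small x : Rabs x <= 1 ->
  1 - x^2/2 + x^4/24 - x^6/720 <= cos x <= 1 - x^2/2 + x^4/24 - x^6/720 + x^8/40320.
Proof.
intros Hx. apply Rabs_le_inv in Hx. pose proof PI2_1.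
rewrite <- cos_ub_eq, <- cos_lb_eq. apply COS; lra.
Qed.

Lemma r1_ge0 x : 0 <= r1 x.
Proof.
destruct (Req_dec x 0) as [->|H].
- rewrite r1_0; lra.
- rewrite r1_nz by exact H. pose proof (cos_ge x). pose proof (x4_pos x H).
  apply Rdiv_le_0_compat; lra.
Qed.

Lemma r1_near0 x : Rabs x <= 1 -> Rabs (r1 x - /24) <= x^2/720.
Proof.
intros Hx. destruct (Req_dec x 0) as [->|H].
- rewrite r1_0. replace (/24 - /24) with 0 by ring. rewrite Rabs_R0. simpl; lra.
- rewrite r1_nz by exact H. pose proof (x4_pos x H) as H4.
  destruct (cos_bounds_small x Hx) as [Hl Hu].
  assert (Hx2 : x^2 <= 1).
  { apply Rabs_le_inv in Hx. nra. }
  apply Rabs_le. split.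
  + apply (Rmult_le_reg_r (x^4)); [exact H4|].
    replace ((cos x - 1 + x ^ 2 / 2) / x ^ 4 - / 24) with ((cos x - 1 + x ^ 2 / 2 - x^4/24) / x ^ 4) by (field; lra).
    rewrite div_mul_cancel by lra.
    nra.
  + apply (Rmult_le_reg_r (x^4)); [exact H4|].
    replace ((cos x - 1 + x ^ 2 / 2) / x ^ 4 - / 24) with ((cos x - 1 + x ^ 2 / 2 - x^4/24) / x ^ 4) by (field; lra).
    rewrite div_mul_cancel by lra.
    assert (x^8 <= x^6 * 1).
    { replace (x^8) with (x^6 * x^2) by ring. apply Rmult_le_compat_l; [|lra].
      replace (x^6) with ((x^3)^2) by ring. apply pow2_ge_0. }
    assert (0 <= x^6) by (replace (x^6) with ((x^3)^2) by ring; apply pow2_ge_0).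
    nra.
Qed.

Lemma r1_le x : r1 x <= / (1 + x^2).
Proof.
assert (Hp : 0 < 1 + x^2) by (pose proof (pow2_ge_0 x); lra).
destruct (Rle_dec (Rabs x) 1) as [H1|H1].
- pose proof (r1_near0 x H1). apply Rabs_le_inv in H.
  assert (x^2 <= 1) by (apply Rabs_le_inv in H1; nra).
  assert (0 <= x^2) by apply pow2_ge_0.
  assert (/2 <= /(1+x^2)) by (apply Rinv_le_contravar; lra). lra.
- assert (Hx0 : x <> 0) by (intro; subst; rewrite Rabs_R0 in H1; lra).
  rewrite r1_nz by exact Hx0. pose proof (x4_pos x Hx0).
  assert (Hx2: 1 < x^2).
  { destruct (Rle_dec 0 x); [rewrite Rabs_right in H1 by lra|rewrite Rabs_left in H1 by lra]; nra. }
  pose proof (COS_bound x).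
  apply (Rmult_le_reg_r (x^4 * (1+x^2))); [apply Rmult_lt_0_compat; lra|].
  replace ((cos x - 1 + x ^ 2 / 2) / x ^ 4 * (x ^ 4 * (1 + x ^ 2))) with
     ((cos x - 1 + x ^ 2 / 2) * (1 + x^2)) by (field; lra).
  replace (/ (1 + x ^ 2) * (x ^ 4 * (1 + x ^ 2))) with (x^4) by (field; lra).
  replace (x^4) with (x^2*x^2) by ring. nra.
Qed.

Lemma cont_eps f x : (forall eps, 0 < eps -> exists d, 0 < d /\ forall y, Rabs (y - x) < d -> Rabs (f y - f x) < eps) -> continuous f x.
Proof.
intros H. apply continuity_pt_filterlim. intros eps Heps.
destruct (H eps Heps) as [d [Hd Hy]]. exists d. split; [exact Hd|].
intros y [_ Hy']. apply Hy. exact Hy'.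
Qed.

Lemma cont_eps_inv f x : continuous f x -> (forall eps, 0 < eps -> exists d, 0 < d /\ forall y, Rabs (y - x) < d -> Rabs (f y - f x) < eps).
Proof.
intros H. apply continuity_pt_filterlim in H. intros eps Heps.
destruct (H eps Heps) as [d [Hd Hy]]. exists d. split; [exact Hd|].
intros y Hy'. destruct (Req_dec x y) as [<-|Hne].
- rewrite Rminus_diag, Rabs_R0. exact Heps.
- apply Hy. split; [split; [constructor|exact Hne]|exact Hy'].
Qed.

Lemma r1_cont x : continuous r1 x.
Proof.
destruct (Req_dec x 0) as [->|Hx].
- apply cont_eps. intros eps Heps. exists (Rmin 1 eps). split.
  { apply Rmin_pos; lra. }
  intros y Hy. rewrite r1_0. rewrite Rminus_0_r in Hy.
  assert (Hy1 : Rabs y <= 1) by (pose proof (Rmin_l 1 eps); lra).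
  assert (Hye : Rabs y < eps) by (pose proof (Rmin_r 1 eps); lra).
  pose proof (r1_near0 y Hy1).
  assert (y^2 <= 1).
  { apply Rabs_le_inv in Hy1. nra. }
  assert (y^2 <= Rabs y). { rewrite <- (Rabs_right (y^2)) by (apply Rle_ge, pow2_ge_0).
    replace (y^2) with (y*y) by ring. rewrite Rabs_mult. pose proof (Rabs_pos y). nra. }
  lra.
- apply (continuous_ext_loc _ (fun y => (cos y - 1 + y^2/2) / y^4)).
  + exists (mkposreal (Rabs x) (Rabs_pos_lt x Hx)). intros y Hy.
    unfold ball in Hy; simpl in Hy; unfold AbsRing_ball, abs, minus, plus, opp in Hy; simpl in Hy.
    rewrite r1_nz; [reflexivity|]. intros ->. replace (0 + - x) with (- x) in Hy by ring. rewrite Rabs_Ropp in Hy. lra.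
  + apply continuity_pt_filterlim. 
    apply continuity_pt_div.
    * reg.
    * reg.
    * pose proof (x4_pos x Hx). lra.
Qed.


Lemma exRc (f : R -> R) a b : (forall z, continuous f z) -> ex_RInt f a b.
Proof. intros H. apply (ex_RInt_continuous (V:=R_CompleteNormedModule)). intros; apply H. Qed.

Lemma ex_RInt_r1 a b : ex_RInt r1 a b.
Proof. apply exRc. intros; apply r1_cont. Qed.

Lemma RInt_atan a b : RInt (fun x => / (1 + x^2)) a b = atan b - atan a.
Proof.
apply is_RInt_unique.
apply (is_RInt_ext (fun x => / (1 + x²))).
{ intros x _. unfold Rsqr. f_equal. ring. }
apply (is_RInt_derive atan (fun x => / (1 + x²))).
- intros x _. apply is_derive_atan.
- intros x _. apply continuity_pt_filterlim. apply continuity_pt_inv.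
  + reg.
  + pose proof (Rle_0_sqr x). lra.
Qed.

Lemma ex_RInt_atan a b : ex_RInt (fun x => / (1 + x^2)) a b.
Proof.
apply exRc. intros x. apply continuity_pt_filterlim.
apply continuity_pt_inv; [reg|]. pose proof (pow2_ge_0 x). lra.
Qed.

Definition R1 (X : R) : R := RInt r1 (-X) X.

Lemma R1_mono X Y : 0 <= X <= Y -> R1 X <= R1 Y.
Proof.
intros [H0 H1]. unfold R1.
rewrite <- (RInt_Chasles r1 (-Y) (-X) Y) by apply ex_RInt_r1.
rewrite <- (RInt_Chasles r1 (-X) X Y) by apply ex_RInt_r1.
assert (0 <= RInt r1 (-Y) (-X)) by (apply RInt_ge_0; [lra|apply ex_RInt_r1|intros; apply r1_ge0]).
assert (0 <= RInt r1 X Y) by (apply RInt_ge_0; [lra|apply ex_RInt_r1|intros; apply r1_ge0]).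
change (plus (RInt r1 (- Y) (- X)) (plus (RInt r1 (- X) X) (RInt r1 X Y))) with
  (RInt r1 (- Y) (- X) + (RInt r1 (- X) X + RInt r1 X Y)). lra.
Qed.

Lemma R1_bound X : 0 <= X -> R1 X <= PI.
Proof.
intros H. unfold R1.
apply Rle_trans with (RInt (fun x => / (1 + x^2)) (-X) X).
- apply RInt_le; [lra|apply ex_RInt_r1|apply ex_RInt_atan|]. intros; apply r1_le.
- rewrite RInt_atan. pose proof (atan_bound X). pose proof (atan_bound (-X)). lra.
Qed.

Lemma R1_1_pos : 0 < R1 1.
Proof.
unfold R1. apply RInt_gt_0; [lra| |intros; apply r1_cont].
intros x Hx. assert (Hx1 : Rabs x <= 1) by (apply Rabs_le; lra).
pose proof (r1_near0 x Hx1). apply Rabs_le_inv in H.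
assert (x^2 <= 1) by nra. lra.
Qed.

Definition Cset (y : R) : Prop := exists X, 0 <= X /\ y = R1 X.

Lemma Cset_bound : bound Cset.
Proof. exists PI. intros y [X [HX ->]]. apply R1_bound; exact HX. Qed.

Lemma Cset_ne : exists y, Cset y.
Proof. exists (R1 0). exists 0. split; [lra|reflexivity]. Qed.

Definition Cc : R := proj1_sig (completeness Cset Cset_bound Cset_ne).

Lemma Cc_lub : is_lub Cset Cc.
Proof. unfold Cc. destruct (completeness Cset Cset_bound Cset_ne); simpl; auto. Qed.

Lemma Cc_pos : 0 < Cc.
Proof.
destruct Cc_lub as [H _]. assert (R1 1 <= Cc) by (apply H; exists 1; split; [lra|reflexivity]).
pose proof R1_1_pos. lra.
Qed.

Lemma R1_lim eps : 0 < eps -> exists X0, 0 <= X0 /\ forall X, X0 <= X -> Rabs (R1 X - Cc) < eps.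
Proof.
intros Heps. destruct Cc_lub as [Hub Hl].
assert (exists X0, 0 <= X0 /\ Cc - eps < R1 X0).
{ apply Classical_Prop.NNPP. intros Hn.
  assert (is_upper_bound Cset (Cc - eps)).
  { intros y [X [HX ->]]. apply Rnot_lt_le. intro Hc. apply Hn. exists X; split; auto. }
  apply Hl in H. lra. }
destruct H as [X0 [HX0 Hlt]]. exists X0. split; [exact HX0|].
intros X HX. assert (R1 X0 <= R1 X) by (apply R1_mono; lra).
assert (R1 X <= Cc) by (apply Hub; exists X; split; [lra|reflexivity]).
apply Rabs_lt_between'. lra.
Qed.

Definition rho (b h : R) : R := b^4 * r1 (b * h).

Lemma rho_nz b h : h <> 0 -> rho b h = (cos (b*h) - 1 + b^2*h^2/2) / h^4.
Proof.
intros Hh. unfold rho. destruct (Req_dec b 0) as [->|Hb].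
- replace (0 * h) with 0 by ring. rewrite cos_0. field. exact Hh.
- rewrite r1_nz.
  + field. tauto.
  + intro H. apply Rmult_integral in H. tauto.
Qed.

Lemma rho_0 b : rho b 0 = b^4 / 24.
Proof. unfold rho. rewrite Rmult_0_r, r1_0. field. Qed.

Lemma rho_cont b h : continuous (rho b) h.
Proof.
unfold rho. apply (continuous_mult (fun _ => b^4) (fun h => r1 (b*h))).
- apply continuous_const.
- apply (continuous_comp (fun h => b*h) r1).
  + apply (continuous_mult (fun _ => b) (fun h => h)); [apply continuous_const|apply continuous_id].
  + apply r1_cont.
Qed.

Lemma ex_RInt_rho b a c : ex_RInt (rho b) a c.
Proof. apply exRc. intros; apply rho_cont. Qed.

Definition Zi (b T : R) : R := RInt (rho b) (-T) T.

Lemma R1_opp X : R1 (- X) = - R1 X.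
Proof.
unfold R1. rewrite Ropp_involutive. rewrite <- (opp_RInt_swap r1) by apply ex_RInt_r1. reflexivity.
Qed.

Lemma Z_eq b T : Zi b T = Rabs b ^ 3 * R1 (Rabs b * T).
Proof.
unfold Zi.
assert (E : RInt (rho b) (-T) T = b^3 * R1 (b*T)).
{ unfold R1.
  assert (E1 : RInt r1 (-(b*T)) (b*T) = RInt (fun y => scal b (r1 (b*y+0))) (-T) T).
  { transitivity (RInt r1 (b*-T+0) (b*T+0)). { f_equal; ring. }
    symmetry. apply (RInt_comp_lin r1 b 0 (-T) T). apply ex_RInt_r1. }
  rewrite E1.
    match goal with |- _ = ?c * RInt ?f ?x ?y => change (c * RInt f x y) with (scal c (RInt f x y)) end.
    rewrite <- RInt_scal.
    + apply RInt_ext. intros x _. unfold rho. unfold scal; simpl; unfold mult; simpl. rewrite Rplus_0_r. ring.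
    + apply (ex_RInt_ext (fun y => scal b (r1 (b*y))) ). { intros x _. rewrite Rplus_0_r. reflexivity. }
      apply exRc. intros z.
      apply (continuous_mult (fun _ => b) (fun y => r1 (b*y))); [apply continuous_const|].
      apply (continuous_comp (fun h => b*h) r1).
      * apply (continuous_mult (fun _ => b) (fun h => h)); [apply continuous_const|apply continuous_id].
      * apply r1_cont. }
rewrite E. destruct (Rle_dec 0 b).
- rewrite Rabs_right by lra. reflexivity.
- rewrite Rabs_left by lra. replace (- b * T) with (- (b*T)) by ring. rewrite R1_opp. ring.
Qed.

Lemma Z_lim b eps : 0 < eps -> exists T0, forall T, T0 <= T -> Rabs (Zi b T - Rabs b ^ 3 * Cc) < eps.
Proof.
intros Heps. destruct (Req_dec b 0) as [->|Hb].
- exists 0. intros T _. rewrite Z_eq, Rabs_R0. replace (0^3 * R1 (0*T) - 0^3*Cc) with 0 by ring.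
  rewrite Rabs_R0; exact Heps.
- assert (Hb3 : 0 < Rabs b ^ 3) by (apply pow_lt; apply Rabs_pos_lt; exact Hb).
  destruct (R1_lim (eps / Rabs b ^ 3)) as [X0 [HX0 HX]].
  { apply Rdiv_lt_0_compat; auto. }
  exists (X0 / Rabs b). intros T HT. rewrite Z_eq.
  replace (Rabs b ^ 3 * R1 (Rabs b * T) - Rabs b ^ 3 * Cc) with (Rabs b ^3 * (R1 (Rabs b * T) - Cc)) by ring.
  rewrite Rabs_mult, (Rabs_right (Rabs b ^3)) by lra.
  assert (HbT : X0 <= Rabs b * T).
  { pose proof (Rabs_pos_lt b Hb). apply (Rmult_le_compat_l (Rabs b)) in HT; [|lra].
    replace (Rabs b * (X0 / Rabs b)) with X0 in HT by (field; lra). exact HT. }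
  specialize (HX _ HbT).
  apply (Rmult_lt_compat_l (Rabs b ^3)) in HX; [|exact Hb3].
  replace (Rabs b ^ 3 * (eps / Rabs b ^ 3)) with eps in HX by (field; pose proof (Rabs_pos_lt b Hb); lra). exact HX.
Qed.


Definition K (x : R) : R := if Req_EM_T x 0 then 1 else (sin x / x)^4.

Lemma K_nz x : x <> 0 -> K x = (sin x / x)^4.
Proof. intros H. unfold K. destruct (Req_EM_T x 0); [contradiction|reflexivity]. Qed.
Lemma K_0 : K 0 = 1.
Proof. unfold K. destruct (Req_EM_T 0 0); [reflexivity|contradiction]. Qed.

Lemma trig4 l x : 3 * cos l - 2 * cos (l + 2*x) - 2 * cos (l - 2*x) + /2 * cos (l + 4*x) + /2 * cos (l - 4*x)
  = 8 * sin x ^ 4 * cos l.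
Proof.
rewrite !cos_plus, !cos_minus.
replace (4*x) with (2*(2*x)) by ring.
rewrite !cos_2a_sin. rewrite (sin_2a (2*x)). rewrite !cos_2a_sin, !sin_2a.
pose proof (sin2_cos2 x). unfold Rsqr in H.
assert (Hc : cos x * cos x = 1 - sin x * sin x) by lra.
replace (sin x ^4) with ((sin x * sin x) * (sin x * sin x)) by ring.
ring_simplify.
replace (cos x ^ 2) with (1 - sin x * sin x) by (rewrite <- Hc; ring).
field.
Qed.

Definition Wk (d l h : R) : R :=
  / (8 * d^4) * (3 * rho l h - 2 * rho (l + 2*d) h - 2 * rho (l - 2*d) h
                 + /2 * rho (l + 4*d) h + /2 * rho (l - 4*d) h).

Lemma Kcos_id d l h : d <> 0 -> K (d*h) * cos (l*h) = Wk d l h.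
Proof.
intros Hd. unfold Wk. destruct (Req_dec h 0) as [->|Hh].
- rewrite Rmult_0_r, K_0, Rmult_0_r, cos_0, !rho_0. field. exact Hd.
- assert (Hdh : d*h <> 0) by (intro H; apply Rmult_integral in H; tauto).
  rewrite K_nz by exact Hdh. rewrite !rho_nz by exact Hh.
  pose proof (trig4 (l*h) (d*h)) as T.
  replace ((l + 2*d)*h) with (l*h + 2*(d*h)) by ring.
  replace ((l - 2*d)*h) with (l*h - 2*(d*h)) by ring.
  replace ((l + 4*d)*h) with (l*h + 4*(d*h)) by ring.
  replace ((l - 4*d)*h) with (l*h - 4*(d*h)) by ring.
  set (c1 := cos (l*h)) in *. set (c2 := cos (l*h + 2*(d*h))) in *.
  set (c3 := cos (l*h - 2*(d*h))) in *. set (c4 := cos (l*h + 4*(d*h))) in *.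
  set (c5 := cos (l*h - 4*(d*h))) in *. set (s := sin (d*h)) in *.
  replace c2 with ((3*c1 - 2*c3 + /2*c4 + /2*c5 - 8*s^4*c1)/2) by lra.
  field. split; assumption.
Qed.

Lemma cont_plus (f g : R -> R) x : continuous f x -> continuous g x -> continuous (fun y => f y + g y) x.
Proof. intros. apply (continuous_plus (V:=R_NormedModule) f g); auto. Qed.
Lemma cont_minus (f g : R -> R) x : continuous f x -> continuous g x -> continuous (fun y => f y - g y) x.
Proof. intros. apply (continuous_minus (V:=R_NormedModule) f g); auto. Qed.
Lemma cont_mult (f g : R -> R) x : continuous f x -> continuous g x -> continuous (fun y => f y * g y) x.
Proof. intros. apply (continuous_mult (K:=R_AbsRing) f g); auto. Qed.
Lemma cont_scal a (f : R -> R) x : continuous f x -> continuous (fun y => a * f y) x.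
Proof. intros. apply (cont_mult (fun _ => a) f); auto. apply continuous_const. Qed.

Lemma Wk_cont d l h : continuous (Wk d l) h.
Proof.
unfold Wk. apply cont_scal.
apply cont_plus; [apply cont_plus; [apply cont_minus; [apply cont_minus|]|]|];
  try apply cont_scal; apply rho_cont.
Qed.

Lemma K_cont d h : d <> 0 -> continuous (fun h => K (d*h)) h.
Proof.
intros Hd. apply (continuous_ext_loc _ (Wk d 0)).
- apply filter_forall. intros y. rewrite <- Kcos_id by exact Hd. rewrite Rmult_0_l, cos_0, Rmult_1_r. reflexivity.
- apply Wk_cont.
Qed.


Definition limT (g : R -> R) (L : R) : Prop :=
  forall eps, 0 < eps -> exists T0, forall T, T0 <= T -> Rabs (g T - L) < eps.

Lemma limT_ext g1 g2 L : (forall T, g1 T = g2 T) -> limT g1 L -> limT g2 L.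
Proof. intros E H eps He. destruct (H eps He) as [T0 HT]. exists T0. intros T HT'. rewrite <- E. auto. Qed.

Lemma limT_const c : limT (fun _ => c) c.
Proof. intros eps He. exists 0. intros. rewrite Rminus_diag, Rabs_R0. exact He. Qed.

Lemma limT_plus g1 g2 L1 L2 : limT g1 L1 -> limT g2 L2 -> limT (fun T => g1 T + g2 T) (L1 + L2).
Proof.
intros H1 H2 eps He. destruct (H1 (eps/2) ltac:(lra)) as [T1 HT1]. destruct (H2 (eps/2) ltac:(lra)) as [T2 HT2].
exists (Rmax T1 T2). intros T HT. specialize (HT1 T ltac:(pose proof (Rmax_l T1 T2); lra)).
specialize (HT2 T ltac:(pose proof (Rmax_r T1 T2); lra)).
replace (g1 T + g2 T - (L1 + L2)) with ((g1 T - L1) + (g2 T - L2)) by ring.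
eapply Rle_lt_trans; [apply Rabs_triang|]. lra.
Qed.

Lemma limT_scal c g L : limT g L -> limT (fun T => c * g T) (c * L).
Proof.
intros H eps He. destruct (H (eps / (Rabs c + 1))) as [T0 HT].
{ apply Rdiv_lt_0_compat; [lra|pose proof (Rabs_pos c); lra]. }
exists T0. intros T HT'. specialize (HT T HT').
replace (c * g T - c * L) with (c * (g T - L)) by ring. rewrite Rabs_mult.
assert (Rabs c * Rabs (g T - L) <= (Rabs c + 1) * Rabs (g T - L)).
{ apply Rmult_le_compat_r; [apply Rabs_pos|lra]. }
assert ((Rabs c + 1) * Rabs (g T - L) < (Rabs c + 1) * (eps / (Rabs c + 1))).
{ apply Rmult_lt_compat_l; [pose proof (Rabs_pos c); lra|exact HT]. }
replace ((Rabs c + 1) * (eps / (Rabs c + 1))) with eps in H1 by (field; pose proof (Rabs_pos c); lra).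
lra.
Qed.

Lemma limT_minus g1 g2 L1 L2 : limT g1 L1 -> limT g2 L2 -> limT (fun T => g1 T - g2 T) (L1 - L2).
Proof.
intros H1 H2. apply (limT_ext (fun T => g1 T + (-1) * g2 T)).
{ intros; ring. }
replace (L1 - L2) with (L1 + (-1)*L2) by ring. apply limT_plus; auto. apply limT_scal; auto.
Qed.

Lemma RIplus (f g : R -> R) a b : ex_RInt f a b -> ex_RInt g a b ->
  RInt (fun x => f x + g x) a b = RInt f a b + RInt g a b.
Proof. intros. apply (RInt_plus (V:=R_CompleteNormedModule)); auto. Qed.
Lemma RIminus (f g : R -> R) a b : ex_RInt f a b -> ex_RInt g a b ->
  RInt (fun x => f x - g x) a b = RInt f a b - RInt g a b.
Proof. intros. apply (RInt_minus (V:=R_CompleteNormedModule)); auto. Qed.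
Lemma RIscal (f : R -> R) c a b : ex_RInt f a b ->
  RInt (fun x => c * f x) a b = c * RInt f a b.
Proof. intros. apply (RInt_scal (V:=R_CompleteNormedModule)); auto. Qed.

Lemma RInt_comb5 (f1 f2 f3 f4 f5 : R -> R) c0 c1 c2 c3 c4 c5 a b :
  ex_RInt f1 a b -> ex_RInt f2 a b -> ex_RInt f3 a b -> ex_RInt f4 a b -> ex_RInt f5 a b ->
  RInt (fun x => c0 * (c1 * f1 x - c2 * f2 x - c3 * f3 x + c4 * f4 x + c5 * f5 x)) a b =
  c0 * (c1 * RInt f1 a b - c2 * RInt f2 a b - c3 * RInt f3 a b + c4 * RInt f4 a b + c5 * RInt f5 a b).
Proof.
intros H1 H2 H3 H4 H5.
apply is_RInt_unique.
apply (is_RInt_scal (V:=R_NormedModule) (fun x => (c1 * f1 x - c2 * f2 x - c3 * f3 x + c4 * f4 x + c5 * f5 x))).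
apply (is_RInt_plus (V:=R_NormedModule) (fun x => c1 * f1 x - c2 * f2 x - c3 * f3 x + c4 * f4 x) (fun x => c5 * f5 x)).
2:{ apply (is_RInt_scal (V:=R_NormedModule) f5). exact (RInt_correct (V:=R_CompleteNormedModule) _ _ _ H5). }
apply (is_RInt_plus (V:=R_NormedModule) (fun x => c1 * f1 x - c2 * f2 x - c3 * f3 x) (fun x => c4 * f4 x)).
2:{ apply (is_RInt_scal (V:=R_NormedModule) f4). exact (RInt_correct (V:=R_CompleteNormedModule) _ _ _ H4). }
apply (is_RInt_minus (V:=R_NormedModule) (fun x => c1 * f1 x - c2 * f2 x) (fun x => c3 * f3 x)).
2:{ apply (is_RInt_scal (V:=R_NormedModule) f3). exact (RInt_correct (V:=R_CompleteNormedModule) _ _ _ H3). }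
apply (is_RInt_minus (V:=R_NormedModule) (fun x => c1 * f1 x) (fun x => c2 * f2 x)).
- apply (is_RInt_scal (V:=R_NormedModule) f1). exact (RInt_correct (V:=R_CompleteNormedModule) _ _ _ H1).
- apply (is_RInt_scal (V:=R_NormedModule) f2). exact (RInt_correct (V:=R_CompleteNormedModule) _ _ _ H2).
Qed.

Lemma RInt_Wk d l a b : RInt (Wk d l) a b =
  / (8 * d^4) * (3 * RInt (rho l) a b - 2 * RInt (rho (l + 2*d)) a b - 2 * RInt (rho (l - 2*d)) a b
                 + /2 * RInt (rho (l + 4*d)) a b + /2 * RInt (rho (l - 4*d)) a b).
Proof.
unfold Wk. apply RInt_comb5; apply ex_RInt_rho.
Qed.

Definition Elim (d l : R) : R :=
  / (8 * d^4) * (3 * (Rabs l ^ 3 * Cc) - 2 * (Rabs (l + 2*d) ^ 3 * Cc) - 2 * (Rabs (l - 2*d) ^ 3 * Cc)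
                 + /2 * (Rabs (l + 4*d) ^ 3 * Cc) + /2 * (Rabs (l - 4*d) ^ 3 * Cc)).

Lemma Zl b : limT (Zi b) (Rabs b ^ 3 * Cc).
Proof. intros eps He. apply Z_lim; exact He. Qed.

Lemma Ecos_lim d l : d <> 0 ->
  limT (fun T => RInt (fun h => K (d*h) * cos (l*h)) (-T) T) (Elim d l).
Proof.
intros Hd.
apply (limT_ext (fun T => / (8 * d^4) * (3 * Zi l T - 2 * Zi (l + 2*d) T - 2 * Zi (l - 2*d) T
                 + /2 * Zi (l + 4*d) T + /2 * Zi (l - 4*d) T))).
{ intros T. rewrite (RInt_ext _ (Wk d l)). 
  - rewrite RInt_Wk. reflexivity.
  - intros x _. apply Kcos_id; exact Hd. }
unfold Elim. apply limT_scal.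
apply limT_plus; [apply limT_plus; [apply limT_minus; [apply limT_minus|]|]|];
  apply limT_scal; apply Zl.
Qed.

Lemma Elim_zero d l : 0 < d -> 4 * d <= Rabs l -> Elim d l = 0.
Proof.
intros Hd Hl. unfold Elim. destruct (Rle_dec 0 l).
- rewrite Rabs_right in Hl by lra.
  rewrite (Rabs_right l), (Rabs_right (l+2*d)), (Rabs_right (l-2*d)), (Rabs_right (l+4*d)), (Rabs_right (l-4*d)) by lra.
  field. lra.
- rewrite Rabs_left in Hl by lra.
  rewrite (Rabs_left l), (Rabs_left (l+2*d)), (Rabs_left (l-2*d)), (Rabs_left1 (l+4*d)), (Rabs_left (l-4*d)) by lra.
  field. lra.
Qed.

Lemma Elim_0 d : 0 < d -> Elim d 0 = 4 * Cc / d.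
Proof.
intros Hd. unfold Elim.
rewrite Rplus_0_l, Rminus_0_l, Rplus_0_l, Rminus_0_l, Rabs_R0, !Rabs_Ropp.
rewrite (Rabs_right (2*d)), (Rabs_right (4*d)) by lra. field. lra.
Qed.

Lemma RInt_odd (f : R -> R) T : (forall x, f (-x) = - f x) -> (forall x, continuous f x) ->
  RInt f (-T) T = 0.
Proof.
intros Ho Hc.
assert (E : RInt f (-T) T = RInt f T (-T)).
{ apply is_RInt_unique.
  apply (is_RInt_ext (fun y => opp (f (- y)))).
  - intros x _. rewrite Ho. unfold opp; simpl. ring.
  - apply (is_RInt_comp_opp (V:=R_NormedModule)). rewrite Ropp_involutive.
    exact (RInt_correct (V:=R_CompleteNormedModule) _ _ _ (exRc f T (-T) Hc)). }
rewrite <- (opp_RInt_swap (V:=R_CompleteNormedModule) f T (-T)) in E by (apply exRc; exact Hc).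
rewrite <- (opp_RInt_swap (V:=R_CompleteNormedModule) f T (-T)) by (apply exRc; exact Hc).
change (opp (RInt f T (-T))) with (- RInt f T (-T)) in *. lra.
Qed.

Lemma K_even x : K (- x) = K x.
Proof.
destruct (Req_dec x 0) as [->|H].
- rewrite Ropp_0. reflexivity.
- rewrite !K_nz by lra. rewrite sin_neg. f_equal. field. exact H.
Qed.

Lemma Ksin_cont d l x : d <> 0 -> continuous (fun h => K (d*h) * sin (l*h)) x.
Proof.
intros Hd. apply (cont_mult (fun h => K (d*h)) (fun h => sin (l*h))).
- apply K_cont; exact Hd.
- apply continuous_sin_comp. apply cont_scal. apply continuous_id.
Qed.

Lemma Kcos_cont d l x : d <> 0 -> continuous (fun h => K (d*h) * cos (l*h)) x.
Proof.
intros Hd. apply (cont_mult (fun h => K (d*h)) (fun h => cos (l*h))).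
- apply K_cont; exact Hd.
- apply continuous_cos_comp. apply cont_scal. apply continuous_id.
Qed.

Lemma Ksin_int d l T : d <> 0 -> RInt (fun h => K (d*h) * sin (l*h)) (-T) T = 0.
Proof.
intros Hd. apply RInt_odd.
- intros x. replace (d * - x) with (- (d*x)) by ring. replace (l * - x) with (- (l*x)) by ring.
  rewrite K_even, sin_neg. ring.
- intros x. apply Ksin_cont; exact Hd.
Qed.

Lemma Kgen_lim d l p : d <> 0 ->
  limT (fun T => RInt (fun h => K (d*h) * cos (l*h + p)) (-T) T) (cos p * Elim d l).
Proof.
intros Hd.
apply (limT_ext (fun T => cos p * RInt (fun h => K (d*h) * cos (l*h)) (-T) T)).
{ intros T.
  rewrite (RInt_ext (fun h => K (d*h) * cos (l*h + p))
             (fun h => cos p * (K (d*h) * cos (l*h)) - sin p * (K (d*h) * sin (l*h)))).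
  2:{ intros x _. rewrite cos_plus. match goal with |- ?a = ?b => change (@eq R a b) end. ring. }
  rewrite (RIminus (fun h => cos p * (K (d*h) * cos (l*h))) (fun h => sin p * (K (d*h) * sin (l*h)))).
  - rewrite (RIscal (fun h => K (d*h) * sin (l*h))).
    + rewrite Ksin_int by exact Hd. rewrite (RIscal (fun h => K (d*h) * cos (l*h))). ring.
      apply exRc; intros; apply Kcos_cont; exact Hd.
    + apply exRc; intros; apply Ksin_cont; exact Hd.
  - apply exRc; intros; apply cont_scal; apply Kcos_cont; exact Hd.
  - apply exRc; intros; apply cont_scal; apply Ksin_cont; exact Hd. }
apply limT_scal. apply Ecos_lim; exact Hd.
Qed.


Definition term (p q b : nat -> R) (k : nat) (t : R) : R := p k * cos (b k * t) + q k * sin (b k * t).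
Definition Ssum (p q b : nat -> R) (n : nat) (t : R) : R := sum_f_R0 (fun k => term p q b k t) n.
Definition Asum (p q : nat -> R) (n : nat) : R := sum_f_R0 (fun k => Rabs (p k) + Rabs (q k)) n.

Lemma term_bound p q b k t : Rabs (term p q b k t) <= Rabs (p k) + Rabs (q k).
Proof.
unfold term. eapply Rle_trans; [apply Rabs_triang|]. rewrite !Rabs_mult.
pose proof (Rabs_pos (p k)). pose proof (Rabs_pos (q k)).
assert (Rabs (cos (b k * t)) <= 1) by (apply Rabs_le; apply COS_bound).
assert (Rabs (sin (b k * t)) <= 1) by (apply Rabs_le; apply SIN_bound).
assert (Rabs (p k) * Rabs (cos (b k * t)) <= Rabs (p k) * 1) by (apply Rmult_le_compat_l; auto).
assert (Rabs (q k) * Rabs (sin (b k * t)) <= Rabs (q k) * 1) by (apply Rmult_le_compat_l; auto).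
lra.
Qed.

Lemma Asum_grow p q : Un_growing (Asum p q).
Proof. intros n. unfold Asum. simpl. pose proof (Rabs_pos (p (S n))). pose proof (Rabs_pos (q (S n))). lra. Qed.

Lemma Ssum_diff p q b n k t : Rabs (Ssum p q b (n + k) t - Ssum p q b n t) <= Asum p q (n + k) - Asum p q n.
Proof.
induction k.
- rewrite Nat.add_0_r. rewrite Rminus_diag, Rminus_diag, Rabs_R0. lra.
- rewrite Nat.add_succ_r. unfold Ssum, Asum in *. simpl.
  replace (sum_f_R0 (fun k0 : nat => term p q b k0 t) (n + k) + term p q b (S (n + k)) t -
     sum_f_R0 (fun k0 : nat => term p q b k0 t) n) with
    ((sum_f_R0 (fun k0 : nat => term p q b k0 t) (n + k) - sum_f_R0 (fun k0 : nat => term p q b k0 t) n)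
      + term p q b (S (n + k)) t) by ring.
  eapply Rle_trans; [apply Rabs_triang|]. pose proof (term_bound p q b (S (n+k)) t). lra.
Qed.

Lemma Un_cv_bound (u : nat -> R) L c B N : Un_cv u L -> (forall m, (N <= m)%nat -> Rabs (u m - c) <= B) -> Rabs (L - c) <= B.
Proof.
intros Hu Hb. apply Rnot_lt_le. intros Hlt.
destruct (Hu (Rabs (L - c) - B)) as [N0 HN0]; [lra|].
specialize (HN0 (max N N0) ltac:(lia)). specialize (Hb (max N N0) ltac:(lia)).
unfold R_dist in HN0.
assert (Rabs (L - c) <= Rabs (u (max N N0) - L) + Rabs (u (max N N0) - c)).
{ replace (L - c) with (- (u (max N N0) - L) + (u (max N N0) - c)) by ring.
  eapply Rle_trans; [apply Rabs_triang|]. rewrite Rabs_Ropp. lra. }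
lra.
Qed.

Lemma tail_bound p q b l F n t :
  Un_cv (Asum p q) l -> Un_cv (fun m => Ssum p q b m t) (F t) ->
  Rabs (F t - Ssum p q b n t) <= l - Asum p q n.
Proof.
intros HA HF. apply (Un_cv_bound _ _ _ _ n HF).
intros m Hm. replace m with (n + (m - n))%nat by lia.
eapply Rle_trans; [apply Ssum_diff|].
pose proof (growing_ineq _ _ (Asum_grow p q) HA (n + (m - n))). lra.
Qed.

Lemma tail_cv p q l : Un_cv (Asum p q) l -> Un_cv (fun n => l - Asum p q n) 0.
Proof.
intros HA. replace 0 with (l - l) by ring. apply CV_minus; [|exact HA].
intros eps He. exists O. intros. unfold R_dist. rewrite Rminus_diag, Rabs_R0. exact He.
Qed.

Lemma Ssum_cont p q b n x : continuous (Ssum p q b n) x.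
Proof.
induction n.
- unfold Ssum. simpl. unfold term.
  apply cont_plus; apply cont_scal; [apply continuous_cos_comp|apply continuous_sin_comp];
  apply cont_scal; apply continuous_id.
- change (continuous (fun t => Ssum p q b n t + term p q b (S n) t) x).
  apply cont_plus; [exact IHn|]. unfold term.
  apply cont_plus; apply cont_scal; [apply continuous_cos_comp|apply continuous_sin_comp];
  apply cont_scal; apply continuous_id.
Qed.

Lemma F_cont p q b l F x : Un_cv (Asum p q) l -> (forall t, Un_cv (fun m => Ssum p q b m t) (F t)) ->
  continuous F x.
Proof.
intros HA HF. apply cont_eps. intros eps He.
destruct (tail_cv p q l HA (eps/3)) as [N HN]; [lra|].
specialize (HN N (le_n N)). unfold R_dist in HN. rewrite Rminus_0_r in HN.
destruct (cont_eps_inv _ _ (Ssum_cont p q b N x) (eps/3)) as [dl [Hdl Hy]]; [lra|].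
exists dl. split; [exact Hdl|]. intros y Hyx.
pose proof (tail_bound p q b l F N y HA (HF y)).
pose proof (tail_bound p q b l F N x HA (HF x)).
specialize (Hy y Hyx).
pose proof (Rle_abs (l - Asum p q N)).
replace (F y - F x) with ((F y - Ssum p q b N y) + (Ssum p q b N y - Ssum p q b N x) + - (F x - Ssum p q b N x)) by ring.
pose proof (Rabs_triang ((F y - Ssum p q b N y) + (Ssum p q b N y - Ssum p q b N x)) (- (F x - Ssum p q b N x))).
pose proof (Rabs_triang (F y - Ssum p q b N y) (Ssum p q b N y - Ssum p q b N x)).
rewrite Rabs_Ropp in H2. lra.
Qed.

Lemma F_bound p q b l F t : Un_cv (Asum p q) l -> (forall t, Un_cv (fun m => Ssum p q b m t) (F t)) ->
  Rabs (F t) <= l.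
Proof.
intros HA HF. pose proof (tail_bound p q b l F O t HA (HF t)).
assert (Rabs (Ssum p q b O t) <= Asum p q O).
{ unfold Ssum, Asum. simpl. apply term_bound. }
replace (F t) with ((F t - Ssum p q b O t) + Ssum p q b O t) by ring.
eapply Rle_trans; [apply Rabs_triang|]. lra.
Qed.


Ltac Rchg := match goal with |- ?a = ?b => change (@eq R a b) end.

Lemma cos_mPI2 x : cos (x + - (PI/2)) = sin x.
Proof. rewrite cos_plus, cos_neg, sin_neg, cos_PI2, sin_PI2. ring. Qed.

Lemma Kc_cont d l s x : d <> 0 -> continuous (fun h => K (d*h) * cos (l*h + s)) x.
Proof.
intros Hd. apply (cont_mult (fun h => K (d*h)) (fun h => cos (l*h + s))).
- apply K_cont; exact Hd.
- apply continuous_cos_comp. apply (cont_plus (fun h => l*h) (fun _ => s)).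
  + apply cont_scal, continuous_id.
  + apply continuous_const.
Qed.

Lemma Ks_cont d l s x : d <> 0 -> continuous (fun h => K (d*h) * sin (l*h + s)) x.
Proof.
intros Hd. apply (cont_mult (fun h => K (d*h)) (fun h => sin (l*h + s))).
- apply K_cont; exact Hd.
- apply continuous_sin_comp. apply (cont_plus (fun h => l*h) (fun _ => s)).
  + apply cont_scal, continuous_id.
  + apply continuous_const.
Qed.

Lemma Ksgen_lim d l s : d <> 0 ->
  limT (fun T => RInt (fun h => K (d*h) * sin (l*h + s)) (-T) T) (sin s * Elim d l).
Proof.
intros Hd.
apply (limT_ext (fun T => RInt (fun h => K (d*h) * cos (l*h + (s + - (PI/2)))) (-T) T)).
{ intros T. apply RInt_ext. intros x _. rewrite <- cos_mPI2. rewrite Rplus_assoc. reflexivity. }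
rewrite <- cos_mPI2. apply Kgen_lim; exact Hd.
Qed.

Lemma RInt_comb4 (f1 f2 f3 f4 : R -> R) a c x y :
  ex_RInt f1 x y -> ex_RInt f2 x y -> ex_RInt f3 x y -> ex_RInt f4 x y ->
  RInt (fun h => a * (f1 h + f2 h) + c * (f3 h + f4 h)) x y =
  a * (RInt f1 x y + RInt f2 x y) + c * (RInt f3 x y + RInt f4 x y).
Proof.
intros H1 H2 H3 H4. apply is_RInt_unique.
apply (is_RInt_plus (V:=R_NormedModule) (fun h => a * (f1 h + f2 h)) (fun h => c * (f3 h + f4 h))).
- apply (is_RInt_scal (V:=R_NormedModule) (fun h => f1 h + f2 h)).
  apply (is_RInt_plus (V:=R_NormedModule) f1 f2).
  + exact (RInt_correct (V:=R_CompleteNormedModule) _ _ _ H1).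
  + exact (RInt_correct (V:=R_CompleteNormedModule) _ _ _ H2).
- apply (is_RInt_scal (V:=R_NormedModule) (fun h => f3 h + f4 h)).
  apply (is_RInt_plus (V:=R_NormedModule) f3 f4).
  + exact (RInt_correct (V:=R_CompleteNormedModule) _ _ _ H3).
  + exact (RInt_correct (V:=R_CompleteNormedModule) _ _ _ H4).
Qed.

Lemma K_ge0 x : 0 <= K x.
Proof.
destruct (Req_dec x 0) as [->|H]; [rewrite K_0; lra|].
rewrite K_nz by exact H. replace ((sin x / x)^4) with (((sin x / x)^2)^2) by ring. apply pow2_ge_0.
Qed.

Lemma K_le1 x : K x <= 1.
Proof.
destruct (Req_dec x 0) as [->|H]; [rewrite K_0; lra|].
rewrite K_nz by exact H. pose proof (abs_sin_le x).
assert (Hq : Rabs (sin x / x) <= 1).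
{ unfold Rdiv. rewrite Rabs_mult, Rabs_inv. pose proof (Rabs_pos_lt x H).
  apply (Rmult_le_reg_r (Rabs x)); [lra|]. rewrite Rmult_assoc, Rinv_l by lra. lra. }
apply Rabs_le_inv in Hq. set (u := sin x / x) in *.
assert (u^2 <= 1) by nra. assert (0 <= u^2) by apply pow2_ge_0.
replace (u^4) with (u^2*u^2) by ring. nra.
Qed.

Lemma K_x4 x : K x * x^4 <= 1.
Proof.
destruct (Req_dec x 0) as [->|H]; [rewrite K_0; simpl; lra|].
rewrite K_nz by exact H. replace ((sin x / x)^4 * x^4) with (sin x ^ 4) by (field; exact H).
pose proof (SIN_bound x). assert (sin x ^2 <= 1) by nra. assert (0 <= sin x ^2) by apply pow2_ge_0.
replace (sin x ^4) with (sin x ^2 * sin x^2) by ring. nra.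
Qed.

Lemma K_b0 x : K x * (1 + x^2) <= 2.
Proof.
pose proof (K_le1 x). pose proof (K_ge0 x). pose proof (K_x4 x). pose proof (pow2_ge_0 x).
assert (K x * x^2 <= 1).
{ destruct (Rle_dec (x^2) 1).
  - assert (K x * x^2 <= K x * 1) by (apply Rmult_le_compat_l; lra). lra.
  - assert (x^2 <= x^4) by (replace (x^4) with (x^2*x^2) by ring; nra).
    assert (K x * x^2 <= K x * x^4) by (apply Rmult_le_compat_l; lra). lra. }
lra.
Qed.

Lemma K_b1 x : K x * Rabs x * (1 + x^2) <= 2.
Proof.
pose proof (K_le1 x). pose proof (K_ge0 x). pose proof (K_x4 x).
set (a := Rabs x). assert (Ha : 0 <= a) by apply Rabs_pos.
assert (E2 : x^2 = a^2) by (unfold a; symmetry; apply pow2_abs).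
assert (E4 : x^4 = a^4) by (replace (x^4) with (x^2*x^2) by ring; rewrite E2; ring).
rewrite E2. rewrite E4 in H1.
assert (a * (1 + a^2) <= 1 + a^4).
{ assert (Eq : 1 + a^4 - a*(1+a^2) = (1-a)^2*(1+a+a^2)) by ring.
  assert (0 <= (1-a)^2*(1+a+a^2)) by (apply Rmult_le_pos; [apply pow2_ge_0|nra]). lra. }
assert (K x * (a * (1 + a^2)) <= K x * (1 + a^4)) by (apply Rmult_le_compat_l; lra).
nra.
Qed.

Lemma K_b2 x : K x * x^2 * (1 + x^2) <= 4.
Proof.
pose proof (K_le1 x). pose proof (K_ge0 x). pose proof (K_x4 x).
assert (x^2 * (1 + x^2) <= 2 * (1 + x^4)) by nra.
assert (K x * (x^2 * (1 + x^2)) <= K x * (2 * (1 + x^4))) by (apply Rmult_le_compat_l; lra).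
nra.
Qed.

Lemma RInt_maj c d T : 0 <= c -> 0 < d -> 0 <= T ->
  RInt (fun h => c / (1 + (d*h)^2)) (-T) T <= c * PI / d.
Proof.
intros Hc Hd HT.
assert (E : RInt (fun h => c / (1 + (d*h)^2)) (-T) T = c / d * (atan (d*T) - atan (d*(-T)))).
{ apply is_RInt_unique.
  apply (is_RInt_ext (fun h => c / d * (d * / (1 + (d*h)^2)))).
  { intros x _. Rchg. field. split; [|lra]. pose proof (pow2_ge_0 (d*x)). lra. }
  replace (c / d * (atan (d * T) - atan (d * - T))) with
    (c / d * atan (d * T) - c / d * atan (d * - T)) by ring.
  change (c / d * atan (d * T) - c / d * atan (d * - T)) with
    (minus ((fun h => c / d * atan (d*h)) T) ((fun h => c / d * atan (d*h)) (-T))).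
  apply (is_RInt_derive (V:=R_CompleteNormedModule)).
  - intros x _. 
    apply (is_derive_scal (fun h => atan (d*h))).
    assert (Hl : is_derive (fun h => d*h) x d) by (auto_derive; [exact I| ring]).
    pose proof (is_derive_comp atan (fun h => d*h) x (/(1+(d*x)²)) d (is_derive_atan (d*x)) Hl) as H1.
    replace ((d*x)^2) with ((d*x)²) by (unfold Rsqr; ring). exact H1.
  - intros x _. apply cont_scal. apply cont_scal. apply continuity_pt_filterlim.
    apply continuity_pt_inv; [reg|]. pose proof (pow2_ge_0 (d*x)). lra. }
rewrite E. pose proof (atan_bound (d*T)). pose proof (atan_bound (d * -T)).
assert (0 <= c / d) by (apply Rdiv_le_0_compat; lra).
assert (c / d * (atan (d * T) - atan (d * - T)) <= c / d * PI) by (apply Rmult_le_compat_l; lra).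
replace (c * PI / d) with (c / d * PI) by (field; lra). lra.
Qed.

Lemma maj0 d h : K (d*h) <= 2 / (1 + (d*h)^2).
Proof.
pose proof (K_b0 (d*h)). pose proof (pow2_ge_0 (d*h)).
apply (Rmult_le_reg_r (1 + (d*h)^2)); [lra|]. rewrite div_mul_cancel by lra. lra.
Qed.

Lemma maj1 d h : 0 < d -> Rabs h * K (d*h) <= (2/d) / (1 + (d*h)^2).
Proof.
intros Hd. pose proof (K_b1 (d*h)). pose proof (pow2_ge_0 (d*h)).
rewrite Rabs_mult, (Rabs_right d) in H by lra.
apply (Rmult_le_reg_r (d * (1 + (d*h)^2))); [apply Rmult_lt_0_compat; lra|].
replace (2 / d / (1 + (d * h) ^ 2) * (d * (1 + (d * h) ^ 2))) with 2 by (field; lra).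
replace (Rabs h * K (d * h) * (d * (1 + (d * h) ^ 2))) with (K (d * h) * (d * Rabs h) * (1 + (d * h) ^ 2)) by ring.
exact H.
Qed.

Lemma maj2 d h : 0 < d -> h^2 * K (d*h) <= (4/d^2) / (1 + (d*h)^2).
Proof.
intros Hd. pose proof (K_b2 (d*h)). pose proof (pow2_ge_0 (d*h)).
assert (0 < d^2) by (apply pow_lt; lra).
apply (Rmult_le_reg_r (d^2 * (1 + (d*h)^2))); [apply Rmult_lt_0_compat; lra|].
replace (4 / d^2 / (1 + (d * h) ^ 2) * (d^2 * (1 + (d * h) ^ 2))) with 4 by (field; lra).
replace (h^2 * K (d * h) * (d^2 * (1 + (d * h) ^ 2))) with (K (d * h) * (d * h)^2 * (1 + (d * h) ^ 2)) by ring.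
exact H.
Qed.

Definition wK (d bj ph h : R) : R := K (d*h) * cos (bj*h - ph).

Definition ck (p q b : nat -> R) (t0 : R) (j : nat) (d ph : R) (k : nat) : R :=
  p k / 2 * (cos (b k * t0 + ph) * Elim d (b k - b j) + cos (b k * t0 - ph) * Elim d (b k + b j))
  + q k / 2 * (sin (b k * t0 + ph) * Elim d (b k - b j) + sin (b k * t0 - ph) * Elim d (b k + b j)).

Lemma term_id p q b t0 j d ph k h :
  term p q b k (t0+h) * wK d (b j) ph h =
  p k / 2 * (K (d*h) * cos ((b k - b j)*h + (b k * t0 + ph)) + K (d*h) * cos ((b k + b j)*h + (b k * t0 - ph)))
  + q k / 2 * (K (d*h) * sin ((b k - b j)*h + (b k * t0 + ph)) + K (d*h) * sin ((b k + b j)*h + (b k * t0 - ph))).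
Proof.
unfold term, wK.
replace (b k * (t0 + h)) with (b k * h + b k * t0) by ring.
replace ((b k - b j)*h + (b k * t0 + ph)) with ((b k * h + b k * t0) - (b j * h - ph)) by ring.
replace ((b k + b j)*h + (b k * t0 - ph)) with ((b k * h + b k * t0) + (b j * h - ph)) by ring.
set (A := b k * h + b k * t0). set (B := b j * h - ph).
rewrite cos_minus, cos_plus, sin_minus, sin_plus. field.
Qed.


Lemma term_lim p q b t0 j d ph k : d <> 0 ->
  limT (fun T => RInt (fun h => term p q b k (t0+h) * wK d (b j) ph h) (-T) T) (ck p q b t0 j d ph k).
Proof.
intros Hd.
apply (limT_ext (fun T =>
  p k / 2 * (RInt (fun h => K (d*h) * cos ((b k - b j)*h + (b k * t0 + ph))) (-T) T
           + RInt (fun h => K (d*h) * cos ((b k + b j)*h + (b k * t0 - ph))) (-T) T)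
  + q k / 2 * (RInt (fun h => K (d*h) * sin ((b k - b j)*h + (b k * t0 + ph))) (-T) T
           + RInt (fun h => K (d*h) * sin ((b k + b j)*h + (b k * t0 - ph))) (-T) T))).
{ intros T. symmetry.
  transitivity (RInt (fun h =>
     p k / 2 * ((fun h => K (d*h) * cos ((b k - b j)*h + (b k * t0 + ph))) h + (fun h => K (d*h) * cos ((b k + b j)*h + (b k * t0 - ph))) h)
   + q k / 2 * ((fun h => K (d*h) * sin ((b k - b j)*h + (b k * t0 + ph))) h + (fun h => K (d*h) * sin ((b k + b j)*h + (b k * t0 - ph))) h)) (-T) T).
  - apply RInt_ext. intros x _. rewrite term_id. reflexivity.
  - apply (RInt_comb4 (fun h => K (d*h) * cos ((b k - b j)*h + (b k * t0 + ph)))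
                      (fun h => K (d*h) * cos ((b k + b j)*h + (b k * t0 - ph)))
                      (fun h => K (d*h) * sin ((b k - b j)*h + (b k * t0 + ph)))
                      (fun h => K (d*h) * sin ((b k + b j)*h + (b k * t0 - ph)))).
    + apply exRc; intros; apply Kc_cont; exact Hd.
    + apply exRc; intros; apply Kc_cont; exact Hd.
    + apply exRc; intros; apply Ks_cont; exact Hd.
    + apply exRc; intros; apply Ks_cont; exact Hd. }
unfold ck. apply limT_plus; apply limT_scal; apply limT_plus.
- apply Kgen_lim; exact Hd.
- apply Kgen_lim; exact Hd.
- apply Ksgen_lim; exact Hd.
- apply Ksgen_lim; exact Hd.
Qed.


Lemma wK_cont d bj ph x : d <> 0 -> continuous (wK d bj ph) x.
Proof.
intros Hd. apply (continuous_ext_loc _ (fun h => K (d*h) * cos (bj*h + - ph))).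
- apply filter_forall. intros y. reflexivity.
- apply Kc_cont; exact Hd.
Qed.

Lemma shift_cont (g : R -> R) t0 x : (forall y, continuous g y) -> continuous (fun h => g (t0 + h)) x.
Proof.
intros Hg. apply (continuous_comp (fun h => t0 + h) g).
- apply (cont_plus (fun _ => t0) (fun h => h)); [apply continuous_const|apply continuous_id].
- apply Hg.
Qed.

Lemma term_cont p q b k y : continuous (term p q b k) y.
Proof.
unfold term.
apply cont_plus; apply cont_scal; [apply continuous_cos_comp|apply continuous_sin_comp];
apply cont_scal; apply continuous_id.
Qed.

Lemma U_lim p q b t0 j d ph n : d <> 0 ->
  limT (fun T => RInt (fun h => Ssum p q b n (t0+h) * wK d (b j) ph h) (-T) T)
       (sum_f_R0 (ck p q b t0 j d ph) n).
Proof.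
intros Hd. induction n.
- simpl. apply term_lim; exact Hd.
- simpl.
  apply (limT_ext (fun T => RInt (fun h => Ssum p q b n (t0+h) * wK d (b j) ph h) (-T) T
                   + RInt (fun h => term p q b (S n) (t0+h) * wK d (b j) ph h) (-T) T)).
  { intros T. rewrite <- (RIplus (fun h => Ssum p q b n (t0+h) * wK d (b j) ph h)
                               (fun h => term p q b (S n) (t0+h) * wK d (b j) ph h)).
    - apply RInt_ext. intros x _. Rchg. unfold Ssum. simpl. ring.
    - apply exRc. intros z. apply (cont_mult (fun h => Ssum p q b n (t0+h))).
      + apply shift_cont. intros; apply Ssum_cont.
      + apply wK_cont; exact Hd.
    - apply exRc. intros z. apply (cont_mult (fun h => term p q b (S n) (t0+h))).
      + apply (shift_cont (term p q b (S n))). intros y.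
        apply term_cont.
      + apply wK_cont; exact Hd. }
  apply limT_plus; [exact IHn|]. apply term_lim; exact Hd.
Qed.

Lemma sum_zero (c : nat -> R) n : (forall k, (k <= n)%nat -> c k = 0) -> sum_f_R0 c n = 0.
Proof.
induction n; intros H.
- simpl. apply H. lia.
- simpl. rewrite IHn by (intros; apply H; lia). rewrite H by lia. ring.
Qed.

Lemma sum_single (c : nat -> R) j n : (forall k, k <> j -> c k = 0) -> (j <= n)%nat -> sum_f_R0 c n = c j.
Proof.
intros H. induction n; intros Hj.
- assert (j = O) by lia. subst. reflexivity.
- simpl. destruct (Nat.eq_dec j (S n)) as [->|Hne].
  + rewrite sum_zero by (intros; apply H; lia). ring.
  + rewrite IHn by lia. rewrite (H (S n)) by lia. ring.
Qed.

Lemma ck_zero p q b t0 j d ph k : 0 < d -> k <> j -> 4 * d <= Rabs (b k - b j) ->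
  4 * d <= Rabs (b k + b j) -> ck p q b t0 j d ph k = 0.
Proof.
intros Hd Hk H1 H2. unfold ck. rewrite (Elim_zero d (b k - b j)), (Elim_zero d (b k + b j)) by auto. ring.
Qed.

Lemma ck_j p q b t0 j d ph : 0 < d -> 4 * d <= Rabs (b j + b j) ->
  ck p q b t0 j d ph j = 2 * Cc / d * (p j * cos (b j * t0 + ph) + q j * sin (b j * t0 + ph)).
Proof.
intros Hd H2. unfold ck. rewrite (Elim_zero d (b j + b j)) by auto.
rewrite Rminus_diag, Elim_0 by exact Hd. field. lra.
Qed.


Lemma limT_bound g L M : limT g L -> (forall T, 0 <= T -> Rabs (g T) <= M) -> Rabs L <= M.
Proof.
intros Hg Hb. apply Rnot_lt_le. intros Hlt.
destruct (Hg (Rabs L - M)) as [T0 HT0]; [lra|].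
specialize (HT0 (Rmax T0 0) (Rmax_l _ _)). specialize (Hb (Rmax T0 0) (Rmax_r _ _)).
assert (Rabs L <= Rabs (g (Rmax T0 0) - L) + Rabs (g (Rmax T0 0))).
{ replace L with (- (g (Rmax T0 0) - L) + g (Rmax T0 0)) at 1 by ring.
  eapply Rle_trans; [apply Rabs_triang|]. rewrite Rabs_Ropp. lra. }
lra.
Qed.

Lemma limT_eqL g L1 L2 : limT g L1 -> L1 = L2 -> limT g L2.
Proof. intros H <-. exact H. Qed.

Lemma maj_cont c d x : continuous (fun h => c / (1 + (d*h)^2)) x.
Proof.
apply continuity_pt_filterlim. apply continuity_pt_div; [reg|reg|].
pose proof (pow2_ge_0 (d*x)). lra.
Qed.

Lemma bound_int (g : R -> R) c d T : (forall x, continuous g x) ->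
  (forall h, Rabs (g h) <= c / (1 + (d*h)^2)) -> 0 <= c -> 0 < d -> 0 <= T ->
  Rabs (RInt g (-T) T) <= c * PI / d.
Proof.
intros Hc Hb Hc0 Hd HT.
eapply Rle_trans; [apply abs_RInt_le; [lra|apply exRc; exact Hc]|].
eapply Rle_trans; [|apply (RInt_maj c d T Hc0 Hd HT)].
apply RInt_le; [lra| | |].
- apply exRc. intros x. apply continuous_Rabs_comp. apply Hc.
- apply exRc. intros x. apply maj_cont.
- intros x _. apply Hb.
Qed.

Lemma wK_abs d bj ph h : Rabs (wK d bj ph h) <= K (d*h).
Proof.
unfold wK. rewrite Rabs_mult. rewrite (Rabs_right (K (d*h))) by (apply Rle_ge, K_ge0).
pose proof (K_ge0 (d*h)). assert (Rabs (cos (bj*h - ph)) <= 1) by (apply Rabs_le, COS_bound).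
assert (K (d*h) * Rabs (cos (bj*h - ph)) <= K (d*h) * 1) by (apply Rmult_le_compat_l; lra). lra.
Qed.

Lemma V_lim F0 l' w bj d ph : 0 < d -> 4 * d <= Rabs bj ->
  (l' = 0 \/ (4 * d <= Rabs (w + bj) /\ 4 * d <= Rabs (w - bj))) ->
  limT (fun T => RInt (fun h => (F0 + l' * sin (w*h)) * wK d bj ph h) (-T) T) 0.
Proof.
intros Hd Hbj Hl. assert (Hd0 : d <> 0) by lra.
apply (limT_ext (fun T =>
  F0 * (RInt (fun h => K (d*h) * cos (bj*h + - ph)) (-T) T + RInt (fun _ => 0) (-T) T)
  + l' / 2 * (RInt (fun h => K (d*h) * sin ((w + bj)*h + - ph)) (-T) T
            + RInt (fun h => K (d*h) * sin ((w - bj)*h + ph)) (-T) T))).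
{ intros T. symmetry.
  transitivity (RInt (fun h =>
     F0 * ((fun h => K (d*h) * cos (bj*h + - ph)) h + (fun _ => 0) h)
   + l' / 2 * ((fun h => K (d*h) * sin ((w + bj)*h + - ph)) h + (fun h => K (d*h) * sin ((w - bj)*h + ph)) h)) (-T) T).
  - apply RInt_ext. intros x _. unfold wK. cbv beta. Rchg.
    replace ((w + bj) * x + - ph) with (w*x + (bj*x - ph)) by ring.
    replace ((w - bj) * x + ph) with (w*x - (bj*x - ph)) by ring.
    replace (bj * x + - ph) with (bj*x - ph) by ring.
    set (B := bj*x - ph). rewrite (sin_plus (w*x) B), (sin_minus (w*x) B). field.
  - apply (RInt_comb4 (fun h => K (d*h) * cos (bj*h + - ph)) (fun _ => 0)
                      (fun h => K (d*h) * sin ((w + bj)*h + - ph))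
                      (fun h => K (d*h) * sin ((w - bj)*h + ph))).
    + apply exRc; intros; apply Kc_cont; exact Hd0.
    + apply exRc; intros; apply continuous_const.
    + apply exRc; intros; apply Ks_cont; exact Hd0.
    + apply exRc; intros; apply Ks_cont; exact Hd0. }
assert (E0 : forall T, RInt (fun _ : R => 0) (-T) T = 0).
{ intros T. rewrite RInt_const. unfold scal; simpl; unfold mult; simpl. ring. }
apply (limT_eqL _ (F0 * (cos (- ph) * Elim d bj + 0)
   + l' / 2 * (sin (- ph) * Elim d (w + bj) + sin ph * Elim d (w - bj)))).
2:{ rewrite (Elim_zero d bj) by auto. destruct Hl as [->|[H1 H2]].
    - field.
    - rewrite (Elim_zero d (w + bj)), (Elim_zero d (w - bj)) by auto. field. }
apply limT_plus; apply limT_scal; apply limT_plus.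
- apply Kgen_lim; exact Hd0.
- apply (limT_ext (fun _ => 0)). { intros T. rewrite E0. reflexivity. } apply limT_const.
- apply Ksgen_lim; exact Hd0.
- apply Ksgen_lim; exact Hd0.
Qed.


Lemma RIminus_prod (f g w : R -> R) a c :
  (forall x, continuous f x) -> (forall x, continuous g x) -> (forall x, continuous w x) ->
  RInt (fun h => f h * w h) a c - RInt (fun h => g h * w h) a c = RInt (fun h => (f h - g h) * w h) a c.
Proof.
intros Hf Hg Hw. rewrite <- (RIminus (fun h => f h * w h) (fun h => g h * w h)).
- apply RInt_ext. intros x _. Rchg. ring.
- apply exRc. intros x. apply cont_mult; auto.
- apply exRc. intros x. apply cont_mult; auto.
Qed.

Lemma extract p q b l F t0 j d ph l' w A0 B0 :
  Un_cv (Asum p q) l -> (forall t, Un_cv (fun m => Ssum p q b m t) (F t)) -> 0 < d ->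
  (forall k, k <> j -> 4 * d <= Rabs (b k - b j)) -> (forall k, 0 <= b k) -> 4 * d <= b j ->
  (l' = 0 \/ (4 * d <= Rabs (w + b j) /\ 4 * d <= Rabs (w - b j))) -> 0 <= A0 -> 0 <= B0 ->
  (forall h, Rabs (F (t0+h) - (F t0 + l' * sin (w*h))) <= A0 * Rabs h + B0 * h^2) ->
  Rabs (p j * cos (b j * t0 + ph) + q j * sin (b j * t0 + ph)) * d <= (A0 + 2 * B0 / d) * PI / Cc.
Proof.
intros HA HF Hd Hsep Hbpos Hbj Hl HA0 HB0 He.
assert (Hd0 : d <> 0) by lra.
set (X := p j * cos (b j * t0 + ph) + q j * sin (b j * t0 + ph)).
set (M1 := (2*A0/d + 4*B0/d^2) * PI / d).
assert (Fc : forall x, continuous F x) by (intros; eapply F_cont; eauto).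
assert (Hw : forall x, continuous (wK d (b j) ph) x) by (intros; apply wK_cont; exact Hd0).
assert (HFs : forall x, continuous (fun h => F (t0 + h)) x) by (intros; apply shift_cont; exact Fc).
assert (Step1 : forall n, (j <= n)%nat -> Rabs (2 * Cc / d * X) <= M1 + 2 * (l - Asum p q n) * PI / d).
{ intros n Hn.
  assert (Hsum : sum_f_R0 (ck p q b t0 j d ph) n = 2 * Cc / d * X).
  { rewrite (sum_single _ j n).
    - unfold X. apply ck_j; [exact Hd|]. pose proof (Hbpos j). rewrite Rabs_right by lra. lra.
    - intros k Hk. apply ck_zero; auto. pose proof (Hbpos k). rewrite Rabs_right by lra. lra.
    - exact Hn. }
  set (U := fun T => RInt (fun h => Ssum p q b n (t0+h) * wK d (b j) ph h) (-T) T).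
  set (V := fun T => RInt (fun h => (F t0 + l' * sin (w*h)) * wK d (b j) ph h) (-T) T).
  apply (limT_bound (fun T => U T - V T)).
  - apply (limT_eqL _ (sum_f_R0 (ck p q b t0 j d ph) n - 0)).
    + apply limT_minus.
      * apply U_lim; exact Hd0.
      * apply V_lim; auto. rewrite Rabs_right by lra. exact Hbj.
    + rewrite Hsum. ring.
  - intros T HT.
    set (I := RInt (fun h => F (t0+h) * wK d (b j) ph h) (-T) T).
    assert (E1 : I - U T = RInt (fun h => (F (t0+h) - Ssum p q b n (t0+h)) * wK d (b j) ph h) (-T) T).
    { unfold I, U. apply (RIminus_prod (fun h => F (t0+h)) (fun h => Ssum p q b n (t0+h))); auto.
      intros; apply shift_cont; intros; apply Ssum_cont. }
    assert (E2 : I - V T = RInt (fun h => (F (t0+h) - (F t0 + l' * sin (w*h))) * wK d (b j) ph h) (-T) T).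
    { unfold I, V. apply (RIminus_prod (fun h => F (t0+h)) (fun h => F t0 + l' * sin (w*h))); auto.
      intros; apply cont_plus; [apply continuous_const|]. apply cont_scal.
      apply continuous_sin_comp. apply cont_scal. apply continuous_id. }
    assert (B1 : Rabs (I - U T) <= (2 * (l - Asum p q n)) * PI / d).
    { rewrite E1. apply bound_int; auto.
      - intros x. apply cont_mult; auto. apply (cont_minus (fun h => F (t0+h)) (fun h => Ssum p q b n (t0+h))); auto.
        apply shift_cont; intros; apply Ssum_cont.
      - intros h. rewrite Rabs_mult.
        pose proof (tail_bound p q b l F n (t0+h) HA (HF (t0+h))).
        pose proof (wK_abs d (b j) ph h). pose proof (maj0 d h). pose proof (K_ge0 (d*h)).
        apply Rle_trans with ((l - Asum p q n) * K (d*h)).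
        + apply Rmult_le_compat; auto using Rabs_pos.
        + replace (2 * (l - Asum p q n) / (1 + (d * h) ^ 2)) with ((l - Asum p q n) * (2 / (1 + (d * h) ^ 2)))
            by (field; pose proof (pow2_ge_0 (d*h)); lra).
          apply Rmult_le_compat_l; [pose proof (Rabs_pos (F (t0 + h) - Ssum p q b n (t0 + h))); lra|].
          exact H1.
      - pose proof (tail_bound p q b l F n t0 HA (HF t0)). pose proof (Rabs_pos (F t0 - Ssum p q b n t0)). lra. }
    assert (B2 : Rabs (I - V T) <= (2*A0/d + 4*B0/d^2) * PI / d).
    { rewrite E2. apply bound_int; auto.
      - intros x. apply cont_mult; auto. apply (cont_minus (fun h => F (t0+h)) (fun h => F t0 + l' * sin (w*h))); auto.
        apply cont_plus; [apply continuous_const|]. apply cont_scal.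
        apply continuous_sin_comp. apply cont_scal. apply continuous_id.
      - intros h. rewrite Rabs_mult.
        pose proof (He h). pose proof (wK_abs d (b j) ph h). pose proof (K_ge0 (d*h)).
        pose proof (maj1 d h Hd). pose proof (maj2 d h Hd).
        apply Rle_trans with ((A0 * Rabs h + B0 * h^2) * K (d*h)).
        + apply Rmult_le_compat; auto using Rabs_pos.
        + replace ((2 * A0 / d + 4 * B0 / d ^ 2) / (1 + (d * h) ^ 2)) with
             (A0 * (2 / d / (1 + (d * h) ^ 2)) + B0 * (4 / d ^ 2 / (1 + (d * h) ^ 2))).
          2:{ field; repeat split; (pose proof (pow2_ge_0 (d*h)); lra). }
          replace ((A0 * Rabs h + B0 * h ^ 2) * K (d * h)) with (A0 * (Rabs h * K (d*h)) + B0 * (h^2 * K (d*h))) by ring.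
          apply Rplus_le_compat; apply Rmult_le_compat_l; auto.
      - assert (0 <= 2*A0/d) by (apply Rdiv_le_0_compat; lra).
        assert (0 <= 4*B0/d^2) by (apply Rdiv_le_0_compat; [lra|apply pow_lt; lra]).
        lra. }
    assert (Tr : Rabs ((I - V T) - (I - U T)) <= Rabs (I - V T) + Rabs (I - U T)).
    { unfold Rminus at 1. eapply Rle_trans; [apply Rabs_triang|]. rewrite Rabs_Ropp. lra. }
    replace (U T - V T) with ((I - V T) - (I - U T)) by (Rchg; ring).
    unfold M1. lra. }
assert (Step2 : Rabs (2 * Cc / d * X) <= M1).
{ apply Rnot_lt_le. intros Hlt.
  destruct (tail_cv p q l HA ((Rabs (2 * Cc / d * X) - M1) * d / (2 * PI))) as [N HN].
  { apply Rdiv_lt_0_compat; [apply Rmult_lt_0_compat; lra|pose proof PI_RGT_0; lra]. }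
  specialize (HN (max N j) ltac:(lia)). specialize (Step1 (max N j) ltac:(lia)).
  unfold R_dist in HN. rewrite Rminus_0_r in HN.
  pose proof (Rle_abs (l - Asum p q (max N j))).
  assert (2 * (l - Asum p q (max N j)) * PI / d < Rabs (2 * Cc / d * X) - M1).
  { pose proof PI_RGT_0.
    apply (Rmult_lt_reg_r (d / (2 * PI))); [apply Rdiv_lt_0_compat; lra|].
    replace (2 * (l - Asum p q (max N j)) * PI / d * (d / (2 * PI))) with (l - Asum p q (max N j)) by (field; lra).
    replace ((Rabs (2 * Cc / d * X) - M1) * (d / (2 * PI))) with ((Rabs (2 * Cc / d * X) - M1) * d / (2 * PI)) by (field; lra).
    lra. }
  lra. }
pose proof Cc_pos as Hc. pose proof PI_RGT_0 as Hpi.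
rewrite Rabs_mult, (Rabs_right (2 * Cc / d)) in Step2 by (apply Rle_ge, Rdiv_le_0_compat; lra).
apply (Rmult_le_reg_r (2 * Cc / d^2)); [apply Rdiv_lt_0_compat; [lra|apply pow_lt; lra]|].
replace (Rabs X * d * (2 * Cc / d ^ 2)) with (2 * Cc / d * Rabs X) by (field; lra).
replace ((A0 + 2 * B0 / d) * PI / Cc * (2 * Cc / d ^ 2)) with M1 by (unfold M1; field; lra).
exact Step2.
Qed.


Lemma b_lt (b : nat -> R) : (forall j, b j < b (S j)) -> forall k m, (k < m)%nat -> b k < b m.
Proof.
intros Hb k m Hkm. induction m.
- lia.
- destruct (Nat.eq_dec k m) as [->|Hne]; [apply Hb|].
  specialize (IHm ltac:(lia)). specialize (Hb m). lra.
Qed.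

Lemma b_le (b : nat -> R) : (forall j, b j < b (S j)) -> forall k m, (k <= m)%nat -> b k <= b m.
Proof.
intros Hb k m Hkm. destruct (Nat.eq_dec k m) as [->|Hne]; [lra|].
apply Rlt_le, b_lt; auto; lia.
Qed.

Lemma Delta_pos b j : (forall j, 0 < b j) -> (forall j, b j < b (S j)) -> 0 < Delta_b b j.
Proof.
intros Hp Hb. unfold Delta_b. apply Rmin_pos.
- destruct j; simpl; [specialize (Hp O); lra|specialize (Hb j); lra].
- specialize (Hb j); lra.
Qed.

Lemma Delta_le_bj b j : (forall j, 0 < b j) -> Delta_b b j <= b j.
Proof.
intros Hp. unfold Delta_b. eapply Rle_trans; [apply Rmin_l|].
destruct j; simpl; [lra|specialize (Hp j); lra].
Qed.

Lemma Delta_sep b j k : (forall j, b j < b (S j)) -> k <> j -> Delta_b b j <= Rabs (b k - b j).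
Proof.
intros Hb Hk. unfold Delta_b. destruct (Nat.lt_total k j) as [Hlt|[Heq|Hgt]].
- eapply Rle_trans; [apply Rmin_l|]. destruct j; [lia|]. simpl.
  assert (b k <= b j) by (apply b_le; auto; lia).
  pose proof (Hb j). rewrite Rabs_left by lra. lra.
- contradiction.
- eapply Rle_trans; [apply Rmin_r|].
  assert (b (S j) <= b k) by (apply b_le; auto; lia).
  pose proof (Hb j). rewrite Rabs_right by lra. lra.
Qed.

Lemma Delta_sep0 b j : (forall j, 0 < b j) -> (forall j, b j < b (S j)) -> (1 <= j)%nat ->
  Delta_b b j <= Rabs (b O - b j) /\ Delta_b b j <= Rabs (b O + b j).
Proof.
intros Hp Hb Hj. split.
- apply Delta_sep; auto. lia.
- pose proof (Delta_le_bj b j Hp). pose proof (Hp O). pose proof (Hp j).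
  rewrite Rabs_right by lra. lra.
Qed.

Lemma extract_b p q b l F t0 j ph l' A0 B0 :
  Un_cv (Asum p q) l -> (forall t, Un_cv (fun m => Ssum p q b m t) (F t)) ->
  (forall j, 0 < b j) -> (forall j, b j < b (S j)) ->
  (l' = 0 \/ (1 <= j)%nat) -> 0 <= A0 -> 0 <= B0 ->
  (forall h, Rabs (F (t0+h) - (F t0 + l' * sin (b O * h))) <= A0 * Rabs h + B0 * h^2) ->
  Rabs (p j * cos (b j * t0 + ph) + q j * sin (b j * t0 + ph)) * Delta_b b j
    <= 4 * ((A0 + 8 * B0 / Delta_b b j) * PI / Cc).
Proof.
intros HA HF Hp Hb Hl HA0 HB0 He.
pose proof (Delta_pos b j Hp Hb) as HD.
pose proof (extract p q b l F t0 j (Delta_b b j / 4) ph l' (b O) A0 B0 HA HF) as X.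
assert (E : Rabs (p j * cos (b j * t0 + ph) + q j * sin (b j * t0 + ph)) * (Delta_b b j / 4) <=
   (A0 + 2 * B0 / (Delta_b b j / 4)) * PI / Cc).
{ apply X; auto.
  - lra.
  - intros k Hk. replace (4 * (Delta_b b j / 4)) with (Delta_b b j) by field. apply Delta_sep; auto.
  - intros k. specialize (Hp k). lra.
  - replace (4 * (Delta_b b j / 4)) with (Delta_b b j) by field. apply Delta_le_bj; auto.
  - destruct Hl as [Hl|Hl]; [left; exact Hl|right].
    replace (4 * (Delta_b b j / 4)) with (Delta_b b j) by field.
    destruct (Delta_sep0 b j Hp Hb Hl). split; auto. }
replace (2 * B0 / (Delta_b b j / 4)) with (8 * B0 / Delta_b b j) in E by (field; lra).
lra.
Qed.


Lemma sqrt_le_sum P Q : sqrt (P^2 + Q^2) <= Rabs P + Rabs Q.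
Proof.
assert (H : P^2 + Q^2 <= (Rabs P + Rabs Q)^2).
{ replace ((Rabs P + Rabs Q)^2) with (Rabs P ^2 + Rabs Q^2 + 2 * Rabs P * Rabs Q) by ring.
  rewrite !pow2_abs. pose proof (Rabs_pos P). pose proof (Rabs_pos Q). nra. }
rewrite <- (sqrt_pow2 (Rabs P + Rabs Q)) by (pose proof (Rabs_pos P); pose proof (Rabs_pos Q); lra).
apply sqrt_le_1_alt. exact H.
Qed.

Lemma PQ_bound p q th :
  sqrt (p^2 + q^2) <= Rabs (p * cos (th + 0) + q * sin (th + 0)) + Rabs (p * cos (th + PI/2) + q * sin (th + PI/2)).
Proof.
rewrite Rplus_0_r, cos_plus, sin_plus, cos_PI2, sin_PI2.
eapply Rle_trans; [|apply sqrt_le_sum].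
right. f_equal. pose proof (sin2_cos2 th). unfold Rsqr in H.
replace (p^2 + q^2) with ((p^2 + q^2) * (sin th * sin th + cos th * cos th)) by (rewrite H; ring). ring.
Qed.

Lemma coef_cv p q l : Un_cv (Asum p q) l -> Un_cv (fun j => Rabs (p j) + Rabs (q j)) 0.
Proof.
intros HA eps He. destruct (HA (eps/2)) as [N HN]; [lra|].
exists (S N). intros n Hn. destruct n as [|n]; [lia|].
unfold R_dist in *. rewrite Rminus_0_r.
assert (E : Rabs (p (S n)) + Rabs (q (S n)) = Asum p q (S n) - Asum p q n) by (unfold Asum; simpl; ring).
rewrite E. specialize (HN (S n) ltac:(lia)) as H1. specialize (HN n ltac:(lia)) as H2.
replace (Asum p q (S n) - Asum p q n) with ((Asum p q (S n) - l) - (Asum p q n - l)) by ring.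
eapply Rle_lt_trans; [apply Rabs_triang|]. rewrite Rabs_Ropp. lra.
Qed.

Lemma deriv_bound F t0 l w Mb : derivable_pt_lim F t0 l -> 0 < w -> (forall t, Rabs (F t) <= Mb) ->
  forall A0, 0 < A0 -> exists B0, 0 <= B0 /\
  forall h, Rabs (F (t0+h) - (F t0 + (l / w) * sin (w*h))) <= A0 * Rabs h + B0 * h^2.
Proof.
intros Hd Hw HM A0 HA0.
destruct (Hd (A0/2) ltac:(lra)) as [d1 Hd1].
assert (Hs : derivable_pt_lim sin 0 (cos 0)) by apply derivable_pt_lim_sin.
rewrite cos_0 in Hs.
destruct (Hs (A0 / (2 * (Rabs l + 1)))) as [d2 Hd2].
{ apply Rdiv_lt_0_compat; [lra|pose proof (Rabs_pos l); lra]. }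
set (d0 := Rmin d1 (d2 / w)).
assert (Hd0 : 0 < d0) by (apply Rmin_pos; [apply cond_pos|apply Rdiv_lt_0_compat; [apply cond_pos|lra]]).
set (C0 := 2 * Mb + Rabs l / w).
assert (HMb : 0 <= Mb) by (pose proof (HM 0); pose proof (Rabs_pos (F 0)); lra).
assert (HC0 : 0 <= C0) by (unfold C0; pose proof (Rabs_pos l); assert (0 <= Rabs l / w) by (apply Rdiv_le_0_compat; lra); lra).
exists (C0 / d0^2). split; [apply Rdiv_le_0_compat; [lra|apply pow_lt; lra]|].
intros h. destruct (Req_dec h 0) as [->|Hh0].
{ rewrite Rplus_0_r, Rmult_0_r, sin_0. replace (F t0 - (F t0 + l / w * 0)) with 0 by ring.
  rewrite Rabs_R0. simpl. nra. }
assert (0 <= C0 / d0^2 * h^2) by (apply Rmult_le_pos; [apply Rdiv_le_0_compat; [lra|apply pow_lt; lra]|apply pow2_ge_0]).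
assert (0 <= A0 * Rabs h) by (apply Rmult_le_pos; [lra|apply Rabs_pos]).
destruct (Rlt_dec (Rabs h) d0) as [Hlt|Hge].
-
  assert (Hh1 : Rabs h < d1) by (pose proof (Rmin_l d1 (d2/w)); fold d0 in H1; lra).
  specialize (Hd1 h Hh0 Hh1).
  assert (Hwh0 : w * h <> 0) by (intro Hc; apply Rmult_integral in Hc; destruct Hc; lra).
  assert (Hwh : Rabs (w*h) < d2).
  { rewrite Rabs_mult, (Rabs_right w) by lra. pose proof (Rmin_r d1 (d2/w)). fold d0 in H1.
    apply (Rmult_lt_reg_r (/ w)); [apply Rinv_0_lt_compat; lra|].
    replace (w * Rabs h * / w) with (Rabs h) by (field; lra). unfold Rdiv in H1. lra. }
  specialize (Hd2 (w*h) Hwh0 Hwh). rewrite Rplus_0_l, sin_0, Rminus_0_r in Hd2.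
  assert (B1 : Rabs (F (t0 + h) - F t0 - l * h) <= A0 / 2 * Rabs h).
  { replace (F (t0 + h) - F t0 - l * h) with (((F (t0 + h) - F t0) / h - l) * h) by (field; exact Hh0).
    rewrite Rabs_mult. apply Rmult_le_compat_r; [apply Rabs_pos|lra]. }
  assert (B2 : Rabs (l * h - l / w * sin (w * h)) <= A0 / 2 * Rabs h).
  { replace (l * h - l / w * sin (w * h)) with (- (l / w) * ((sin (w*h) / (w*h) - 1) * (w*h))) by (field; split; lra).
    rewrite !Rabs_mult, Rabs_Ropp. 
    assert (H3 : Rabs (sin (w * h) / (w * h) - 1) * Rabs (w * h) <= A0 / (2 * (Rabs l + 1)) * Rabs (w*h))
      by (apply Rmult_le_compat_r; [apply Rabs_pos|lra]).
    rewrite Rabs_mult, (Rabs_right w) in H3 by lra. unfold Rdiv at 1. rewrite Rabs_mult, Rabs_inv, (Rabs_right w) by lra.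
    pose proof (Rabs_pos l). pose proof (Rabs_pos h).
    apply Rle_trans with (Rabs l * / w * (A0 / (2 * (Rabs l + 1)) * (w * Rabs h))).
    { rewrite Rmult_assoc. rewrite (Rmult_assoc (Rabs l)). apply Rmult_le_compat_l; [lra|].
      apply Rmult_le_compat_l; [left; apply Rinv_0_lt_compat; lra|]. lra. }
    replace (Rabs l * / w * (A0 / (2 * (Rabs l + 1)) * (w * Rabs h))) with
      ((Rabs l / (Rabs l + 1)) * (A0 / 2 * Rabs h)) by (field; lra).
    assert (Rabs l / (Rabs l + 1) <= 1) by (apply (Rmult_le_reg_r (Rabs l + 1)); [lra|]; rewrite div_mul_cancel by lra; lra).
    assert (0 <= A0 / 2 * Rabs h) by (apply Rmult_le_pos; lra).
    assert (Rabs l / (Rabs l + 1) * (A0 / 2 * Rabs h) <= 1 * (A0 / 2 * Rabs h)) by (apply Rmult_le_compat_r; lra).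
    lra. }
  replace (F (t0 + h) - (F t0 + l / w * sin (w * h))) with ((F (t0 + h) - F t0 - l * h) + (l * h - l / w * sin (w * h))) by ring.
  eapply Rle_trans; [apply Rabs_triang|]. lra.
-
  assert (Hh2 : d0^2 <= h^2).
  { apply Rnot_lt_le in Hge. rewrite <- (pow2_abs h). apply pow_incr. lra. }
  assert (C0 <= C0 / d0^2 * h^2).
  { apply (Rmult_le_reg_r (d0^2)); [apply pow_lt; lra|].
    replace (C0 / d0 ^ 2 * h ^ 2 * d0 ^ 2) with (C0 * h^2) by (field; lra).
    apply Rmult_le_compat_l; lra. }
  assert (Rabs (F (t0 + h) - (F t0 + l / w * sin (w * h))) <= C0).
  { unfold C0. replace (F (t0 + h) - (F t0 + l / w * sin (w * h))) with (F (t0+h) + (- F t0) + (- (l / w * sin (w * h)))) by ring.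
    eapply Rle_trans; [apply Rabs_triang|]. eapply Rle_trans; [apply Rplus_le_compat_r; apply Rabs_triang|].
    rewrite !Rabs_Ropp. pose proof (HM (t0+h)). pose proof (HM t0).
    rewrite Rabs_mult. unfold Rdiv. rewrite Rabs_mult, Rabs_inv, (Rabs_right w) by lra.
    assert (Rabs (sin (w*h)) <= 1) by (apply Rabs_le, SIN_bound).
    assert (Rabs l * / w * Rabs (sin (w * h)) <= Rabs l * / w * 1).
    { apply Rmult_le_compat_l; [|lra]. apply Rmult_le_pos; [apply Rabs_pos|left; apply Rinv_0_lt_compat; lra]. }
    lra. }
  lra.
Qed.

Lemma lip_bound F t0 Mb w : Rlipschitz_at F t0 -> (forall t, Rabs (F t) <= Mb) ->
  exists A0 B0, 0 <= A0 /\ 0 <= B0 /\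
  forall h, Rabs (F (t0+h) - (F t0 + 0 * sin (w*h))) <= A0 * Rabs h + B0 * h^2.
Proof.
intros [L [eta [HL [Heta Hl]]]] HM.
assert (HMb : 0 <= Mb) by (pose proof (HM 0); pose proof (Rabs_pos (F 0)); lra).
exists L, (2 * Mb / eta^2). split; [lra|]. split; [apply Rdiv_le_0_compat; [lra|apply pow_lt; lra]|].
intros h. rewrite Rmult_0_l, Rplus_0_r.
assert (0 <= 2 * Mb / eta^2 * h^2) by (apply Rmult_le_pos; [apply Rdiv_le_0_compat; [lra|apply pow_lt; lra]|apply pow2_ge_0]).
assert (0 <= L * Rabs h) by (apply Rmult_le_pos; [lra|apply Rabs_pos]).
destruct (Rlt_dec (Rabs h) eta) as [Hlt|Hge].
- apply Rabs_lt_between in Hlt.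
  specialize (Hl (t0 + h) ltac:(lra)). replace (t0 + h - t0) with h in Hl by ring. lra.
- assert (Hh2 : eta^2 <= h^2).
  { apply Rnot_lt_le in Hge. rewrite <- (pow2_abs h). apply pow_incr. lra. }
  assert (2 * Mb <= 2 * Mb / eta^2 * h^2).
  { apply (Rmult_le_reg_r (eta^2)); [apply pow_lt; lra|].
    replace (2 * Mb / eta ^ 2 * h ^ 2 * eta ^ 2) with (2 * Mb * h^2) by (field; lra).
    apply Rmult_le_compat_l; lra. }
  assert (Rabs (F (t0 + h) - F t0) <= 2 * Mb).
  { unfold Rminus. eapply Rle_trans; [apply Rabs_triang|]. rewrite Rabs_Ropp.
    pose proof (HM (t0+h)). pose proof (HM t0). lra. }
  lra.
Qed.

Lemma real_nondiff p q b lA F :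
  Un_cv (Asum p q) lA -> (forall t, Un_cv (fun m => Ssum p q b m t) (F t)) ->
  (forall j, 0 < b j) -> (forall j, b j < b (S j)) ->
  forall t0 l, derivable_pt_lim F t0 l -> Un_cv (fun j => Delta_b b j * sqrt (p j ^ 2 + q j ^ 2)) 0.
Proof.
intros HA HF Hp Hb t0 l Hd eps He.
pose proof Cc_pos as HC. pose proof PI_RGT_0 as Hpi.
assert (HM : forall t, Rabs (F t) <= lA) by (intros; eapply F_bound; eauto).
set (A0 := eps * Cc / (32 * PI)).
assert (HA0 : 0 < A0) by (unfold A0; apply Rdiv_lt_0_compat; [apply Rmult_lt_0_compat|]; lra).
destruct (deriv_bound F t0 l (b O) lA Hd (Hp O) HM A0 HA0) as [B0 [HB0 He0]].
set (D := 256 * B0 * PI / (Cc * eps) + 1).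
assert (HD : 1 <= D).
{ unfold D. assert (0 <= 256 * B0 * PI / (Cc * eps)); [|lra].
  apply Rdiv_le_0_compat; [|apply Rmult_lt_0_compat; lra]. apply Rmult_le_pos; lra. }
destruct (coef_cv p q lA HA (eps / D)) as [N1 HN1]; [apply Rdiv_lt_0_compat; lra|].
exists (max N1 1). intros j Hj. unfold R_dist. rewrite Rminus_0_r.
pose proof (Delta_pos b j Hp Hb) as HDj.
assert (Hs0 : 0 <= sqrt (p j ^ 2 + q j ^ 2)) by apply sqrt_pos.
rewrite Rabs_right by (apply Rle_ge, Rmult_le_pos; lra).
destruct (Rlt_dec (Delta_b b j) D) as [Hsm|Hbg].
- specialize (HN1 j ltac:(lia)). unfold R_dist in HN1. rewrite Rminus_0_r in HN1.
  rewrite Rabs_right in HN1 by (pose proof (Rabs_pos (p j)); pose proof (Rabs_pos (q j)); lra).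
  pose proof (sqrt_le_sum (p j) (q j)).
  apply Rle_lt_trans with (Delta_b b j * (Rabs (p j) + Rabs (q j))).
  + apply Rmult_le_compat_l; lra.
  + apply Rlt_le_trans with (D * (eps / D)).
    * apply Rmult_le_0_lt_compat; try lra; pose proof (Rabs_pos (p j)); pose proof (Rabs_pos (q j)); lra.
    * right. field. lra.
- apply Rnot_lt_le in Hbg.
  assert (Hl : (l / b O) = 0 \/ (1 <= j)%nat) by (right; lia).
  pose proof (extract_b p q b lA F t0 j 0 (l / b O) A0 B0 HA HF Hp Hb Hl ltac:(lra) HB0 He0) as X0.
  pose proof (extract_b p q b lA F t0 j (PI/2) (l / b O) A0 B0 HA HF Hp Hb Hl ltac:(lra) HB0 He0) as X1.
  pose proof (PQ_bound (p j) (q j) (b j * t0)) as PQ.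
  assert (Hsq : Delta_b b j * sqrt (p j ^ 2 + q j ^ 2) <= 8 * ((A0 + 8 * B0 / Delta_b b j) * PI / Cc)).
  { apply Rle_trans with (Delta_b b j * (Rabs (p j * cos (b j * t0 + 0) + q j * sin (b j * t0 + 0)) +
        Rabs (p j * cos (b j * t0 + PI / 2) + q j * sin (b j * t0 + PI / 2)))).
    - apply Rmult_le_compat_l; lra.
    - lra. }
  assert (Hb1 : 8 * B0 / Delta_b b j * PI / Cc <= eps / 32).
  { apply (Rmult_le_reg_r (Delta_b b j * Cc)); [apply Rmult_lt_0_compat; lra|].
    replace (8 * B0 / Delta_b b j * PI / Cc * (Delta_b b j * Cc)) with (8 * B0 * PI) by (field; lra).
    assert (Hdd : 256 * B0 * PI / (Cc * eps) <= Delta_b b j) by (unfold D in Hbg; lra).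
    apply (Rmult_le_compat_r (Cc * eps)) in Hdd; [|apply Rmult_le_pos; lra].
    replace (256 * B0 * PI / (Cc * eps) * (Cc * eps)) with (256 * B0 * PI) in Hdd by (field; lra).
    nra. }
  replace (8 * ((A0 + 8 * B0 / Delta_b b j) * PI / Cc)) with (8 * (A0 * PI / Cc) + 8 * (8 * B0 / Delta_b b j * PI / Cc)) in Hsq by (field; lra).
  replace (A0 * PI / Cc) with (eps / 32) in Hsq by (unfold A0; field; lra).
  lra.
Qed.

Lemma real_lip p q b lA F :
  Un_cv (Asum p q) lA -> (forall t, Un_cv (fun m => Ssum p q b m t) (F t)) ->
  (forall j, 0 < b j) -> (forall j, b j < b (S j)) ->
  forall t0, Rlipschitz_at F t0 -> exists M, forall j, 1 <= Delta_b b j ->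
    Delta_b b j * sqrt (p j ^ 2 + q j ^ 2) <= M.
Proof.
intros HA HF Hp Hb t0 HL.
pose proof Cc_pos as HC. pose proof PI_RGT_0 as Hpi.
assert (HM : forall t, Rabs (F t) <= lA) by (intros; eapply F_bound; eauto).
destruct (lip_bound F t0 lA (b O) HL HM) as [A0 [B0 [HA0 [HB0 He0]]]].
exists (8 * ((A0 + 8 * B0) * PI / Cc)). intros j Hj.
assert (Hl : (0:R) = 0 \/ (1 <= j)%nat) by (left; reflexivity).
pose proof (extract_b p q b lA F t0 j 0 0 A0 B0 HA HF Hp Hb Hl HA0 HB0 He0) as X0.
pose proof (extract_b p q b lA F t0 j (PI/2) 0 A0 B0 HA HF Hp Hb Hl HA0 HB0 He0) as X1.
pose proof (PQ_bound (p j) (q j) (b j * t0)) as PQ.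
assert (Hsq : Delta_b b j * sqrt (p j ^ 2 + q j ^ 2) <= 8 * ((A0 + 8 * B0 / Delta_b b j) * PI / Cc)).
{ apply Rle_trans with (Delta_b b j * (Rabs (p j * cos (b j * t0 + 0) + q j * sin (b j * t0 + 0)) +
      Rabs (p j * cos (b j * t0 + PI / 2) + q j * sin (b j * t0 + PI / 2)))).
  - apply Rmult_le_compat_l; lra.
  - lra. }
assert (8 * B0 / Delta_b b j <= 8 * B0).
{ apply (Rmult_le_reg_r (Delta_b b j)); [lra|]. rewrite div_mul_cancel by lra. nra. }
assert ((A0 + 8 * B0 / Delta_b b j) * PI / Cc <= (A0 + 8 * B0) * PI / Cc).
{ unfold Rdiv. apply Rmult_le_compat_r; [left; apply Rinv_0_lt_compat; lra|].
  apply Rmult_le_compat_r; lra. }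
lra.
Qed.


Lemma Cmod_fst z : Rabs (fst z) <= Cmod z.
Proof.
unfold Cmod. rewrite <- sqrt_Rsqr_abs. apply sqrt_le_1_alt. unfold Rsqr. pose proof (pow2_ge_0 (snd z)). nra.
Qed.

Lemma Cmod_snd z : Rabs (snd z) <= Cmod z.
Proof.
unfold Cmod. rewrite <- sqrt_Rsqr_abs. apply sqrt_le_1_alt. unfold Rsqr. pose proof (pow2_ge_0 (fst z)). nra.
Qed.

Lemma Cmod_le z : Cmod z <= Rabs (fst z) + Rabs (snd z).
Proof. unfold Cmod. apply sqrt_le_sum. Qed.

Lemma Cmod_ge0 z : 0 <= Cmod z.
Proof. apply sqrt_pos. Qed.

Lemma Csum_fst u n : fst (Csum u n) = sum_f_R0 (fun k => fst (u k)) n.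
Proof. induction n; simpl; [reflexivity|]. rewrite IHn. reflexivity. Qed.

Lemma Csum_snd u n : snd (Csum u n) = sum_f_R0 (fun k => snd (u k)) n.
Proof. induction n; simpl; [reflexivity|]. rewrite IHn. reflexivity. Qed.

Lemma sum_ext (u v : nat -> R) n : (forall k, u k = v k) -> sum_f_R0 u n = sum_f_R0 v n.
Proof. intros H. induction n; simpl; rewrite ?IHn; rewrite H; reflexivity. Qed.

Definition pR (a : nat -> Cx) k := fst (a k).
Definition qR (a : nat -> Cx) k := - snd (a k).
Definition pI (a : nat -> Cx) k := snd (a k).
Definition qI (a : nat -> Cx) k := fst (a k).

Lemma Ssum_R a b n t : Ssum (pR a) (qR a) b n t = fst (Csum (fun j => Cmul (a j) (Cexpi (b j * t))) n).
Proof.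
rewrite Csum_fst. unfold Ssum. apply sum_ext. intros k. unfold term, pR, qR, Cmul, Cexpi. simpl. ring.
Qed.

Lemma Ssum_I a b n t : Ssum (pI a) (qI a) b n t = snd (Csum (fun j => Cmul (a j) (Cexpi (b j * t))) n).
Proof.
rewrite Csum_snd. unfold Ssum. apply sum_ext. intros k. unfold term, pI, qI, Cmul, Cexpi. simpl. ring.
Qed.

Lemma cv_fst u L : Ccv u L -> Un_cv (fun n => fst (u n)) (fst L).
Proof.
intros H eps He. destruct (H eps He) as [N HN]. exists N. intros n Hn. unfold R_dist.
eapply Rle_lt_trans; [|apply (HN n Hn)]. apply (Cmod_fst (Csub (u n) L)).
Qed.

Lemma cv_snd u L : Ccv u L -> Un_cv (fun n => snd (u n)) (snd L).
Proof.
intros H eps He. destruct (H eps He) as [N HN]. exists N. intros n Hn. unfold R_dist.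
eapply Rle_lt_trans; [|apply (HN n Hn)]. apply (Cmod_snd (Csub (u n) L)).
Qed.

Lemma Cmod_sum_ub a l : Un_cv (fun n => sum_f_R0 (fun j => Cmod (a j)) n) l ->
  forall n, sum_f_R0 (fun j => Cmod (a j)) n <= l.
Proof.
intros H. apply growing_ineq; auto. intros n. simpl. pose proof (Cmod_ge0 (a (S n))). lra.
Qed.

Lemma Asum_cv (p q : nat -> R) (a : nat -> Cx) l :
  Un_cv (fun n => sum_f_R0 (fun j => Cmod (a j)) n) l ->
  (forall k, Rabs (p k) + Rabs (q k) <= 2 * Cmod (a k)) -> exists lA, Un_cv (Asum p q) lA.
Proof.
intros H Hk. destruct (growing_cv (Asum p q)) as [lA HlA].
- apply Asum_grow.
- exists (2 * l). intros x [n ->].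
  apply Rle_trans with (sum_f_R0 (fun j => Cmod (a j) * 2) n).
  + apply sum_Rle. intros. rewrite Rmult_comm. apply Hk.
  + rewrite <- scal_sum. pose proof (Cmod_sum_ub a l H n). lra.
- exists lA; exact HlA.
Qed.

Lemma term_le_sum (u : nat -> R) j : (forall k, 0 <= u k) -> u j <= sum_f_R0 u j.
Proof.
intros H. destruct j; simpl; [lra|]. pose proof (cond_pos_sum u j H). lra.
Qed.

Lemma sqrtR a j : sqrt (pR a j ^ 2 + qR a j ^ 2) = Cmod (a j).
Proof. unfold Cmod, pR, qR. f_equal. ring. Qed.
Lemma sqrtI a j : sqrt (pI a j ^ 2 + qI a j ^ 2) = Cmod (a j).
Proof. unfold Cmod, pI, qI. f_equal. ring. Qed.

Lemma Cmod_scal r z : 0 <= r -> Cmod (Cscal r z) = r * Cmod z.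
Proof.
intros Hr. unfold Cmod, Cscal. cbn [fst snd].
replace ((r * fst z) ^ 2 + (r * snd z) ^ 2) with (r^2 * (fst z ^ 2 + snd z ^ 2)) by ring.
rewrite sqrt_mult_alt by apply pow2_ge_0. f_equal. rewrite <- (pow2_abs r). rewrite sqrt_pow2 by apply Rabs_pos.
apply Rabs_right. lra.
Qed.


Theorem theorem3p1 (a : nat -> Cx) (b : nat -> R) (f : R -> Cx)
  (Ha : Cabs_summable a)
  (Hbpos : forall j, 0 < b j)
  (Hbinc : forall j, b j < b (S j))
  (Hbinf : cv_infty b)
  (Hnot0 : ~ Un_cv (fun j => Cmod (Cscal (Delta_b b j) (a j))) 0)
  (Hf : forall t, Ccv (Csum (fun j => Cmul (a j) (Cexpi (b j * t)))) (f t)) :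
  (Cbounded f /\ (forall t, Ccontinuous_at f t) /\ (forall t, ~ Cdifferentiable_at f t))
  /\ (Rbounded (fun t => Cre (f t)) /\ (forall t, continuity_pt (fun t => Cre (f t)) t)
      /\ (forall t, ~ exists l, derivable_pt_lim (fun t => Cre (f t)) t l))
  /\ (Rbounded (fun t => Cim (f t)) /\ (forall t, continuity_pt (fun t => Cim (f t)) t)
      /\ (forall t, ~ exists l, derivable_pt_lim (fun t => Cim (f t)) t l))
  /\ ((forall M, exists j, M < Cmod (a j) * Delta_b b j) ->
      forall t0, ~ Clipschitz_at f t0
                 /\ ~ Rlipschitz_at (fun t => Cre (f t)) t0
                 /\ ~ Rlipschitz_at (fun t => Cim (f t)) t0).
Proof.
destruct Ha as [l Hl].
assert (HFR : forall t, Un_cv (fun m => Ssum (pR a) (qR a) b m t) (Cre (f t))).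
{ intros t. pose proof (cv_fst _ _ (Hf t)) as H. intros eps He. destruct (H eps He) as [N HN].
  exists N. intros n Hn. rewrite Ssum_R. apply HN; auto. }
assert (HFI : forall t, Un_cv (fun m => Ssum (pI a) (qI a) b m t) (Cim (f t))).
{ intros t. pose proof (cv_snd _ _ (Hf t)) as H. intros eps He. destruct (H eps He) as [N HN].
  exists N. intros n Hn. rewrite Ssum_I. apply HN; auto. }
destruct (Asum_cv (pR a) (qR a) a l Hl) as [lR HlR].
{ intros k. unfold pR, qR. rewrite Rabs_Ropp. pose proof (Cmod_fst (a k)). pose proof (Cmod_snd (a k)). lra. }
destruct (Asum_cv (pI a) (qI a) a l Hl) as [lI HlI].
{ intros k. unfold pI, qI. pose proof (Cmod_fst (a k)). pose proof (Cmod_snd (a k)). lra. }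
assert (NR : ~ Un_cv (fun j => Delta_b b j * sqrt (pR a j ^ 2 + qR a j ^ 2)) 0).
{ intros H. apply Hnot0. intros eps He. destruct (H eps He) as [N HN]. exists N. intros n Hn.
  specialize (HN n Hn). rewrite sqrtR in HN. rewrite Cmod_scal by (left; apply Delta_pos; auto). exact HN. }
assert (NI : ~ Un_cv (fun j => Delta_b b j * sqrt (pI a j ^ 2 + qI a j ^ 2)) 0).
{ intros H. apply Hnot0. intros eps He. destruct (H eps He) as [N HN]. exists N. intros n Hn.
  specialize (HN n Hn). rewrite sqrtI in HN. rewrite Cmod_scal by (left; apply Delta_pos; auto). exact HN. }
assert (CR : forall x, continuous (fun t => Cre (f t)) x) by (intros; apply (F_cont (pR a) (qR a) b lR); auto).
assert (CI : forall x, continuous (fun t => Cim (f t)) x) by (intros; apply (F_cont (pI a) (qI a) b lI); auto).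
assert (Gen : forall p q F lA t0, Un_cv (Asum p q) lA -> (forall t, Un_cv (fun m => Ssum p q b m t) (F t)) ->
   (forall j, sqrt (p j ^ 2 + q j ^ 2) = Cmod (a j)) ->
   (forall M, exists j, M < Cmod (a j) * Delta_b b j) -> ~ Rlipschitz_at F t0).
{ intros p q F lA t0 HA HF Hsq HM HL.
  destruct (real_lip p q b lA F HA HF Hbpos Hbinc t0 HL) as [M0 HM0].
  destruct (HM (Rmax M0 0 + l + 1)) as [j Hj].
  pose proof (Delta_pos b j Hbpos Hbinc) as HD.
  assert (Hal : Cmod (a j) <= l).
  { eapply Rle_trans; [apply (term_le_sum (fun j => Cmod (a j)))|apply Cmod_sum_ub; exact Hl].
    intros; apply Cmod_ge0. }
  pose proof (Cmod_ge0 (a j)). pose proof (Rmax_l M0 0). pose proof (Rmax_r M0 0).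
  destruct (Rlt_dec (Delta_b b j) 1) as [Hlt|Hge].
  - assert (Cmod (a j) * Delta_b b j <= Cmod (a j) * 1) by (apply Rmult_le_compat_l; lra). lra.
  - apply Rnot_lt_le in Hge. specialize (HM0 j Hge). rewrite Hsq in HM0. lra. }
split; [|split; [|split]].
- split; [|split].
  + exists (lR + lI). intros t. eapply Rle_trans; [apply Cmod_le|].
    pose proof (F_bound _ _ b lR (fun t => Cre (f t)) t HlR HFR).
    pose proof (F_bound _ _ b lI (fun t => Cim (f t)) t HlI HFI). unfold Cre, Cim in *. lra.
  + intros t eps He.
    destruct (cont_eps_inv _ _ (CR t) (eps/2)) as [d1 [Hd1 H1]]; [lra|].
    destruct (cont_eps_inv _ _ (CI t) (eps/2)) as [d2 [Hd2 H2]]; [lra|].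
    exists (Rmin d1 d2). split; [apply Rmin_pos; auto|]. intros y Hy.
    specialize (H1 y ltac:(pose proof (Rmin_l d1 d2); lra)).
    specialize (H2 y ltac:(pose proof (Rmin_r d1 d2); lra)).
    eapply Rle_lt_trans; [apply Cmod_le|]. unfold Cre, Cim in *. simpl. lra.
  + intros t [lc Hlc]. apply NR. apply (real_nondiff (pR a) (qR a) b lR (fun t => Cre (f t)) HlR HFR Hbpos Hbinc t (fst lc)).
    intros eps He. destruct (Hlc eps He) as [d [Hd Hh]]. exists (mkposreal d Hd). intros h Hh0 Hhd. simpl in Hhd.
    specialize (Hh h Hh0 Hhd). eapply Rle_lt_trans; [|exact Hh].
    replace ((Cre (f (t + h)) - Cre (f t)) / h - fst lc) with
      (fst (Csub (Cscal (/ h) (Csub (f (t + h)) (f t))) lc)) by (unfold Cre, Csub, Cscal; simpl; field; exact Hh0).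
    apply Cmod_fst.
- split; [|split].
  + exists lR. intros t. apply (F_bound _ _ b lR (fun t => Cre (f t)) t HlR HFR).
  + intros t. apply continuity_pt_filterlim. apply CR.
  + intros t [l0 Hl0]. apply NR. exact (real_nondiff (pR a) (qR a) b lR _ HlR HFR Hbpos Hbinc t l0 Hl0).
- split; [|split].
  + exists lI. intros t. apply (F_bound _ _ b lI (fun t => Cim (f t)) t HlI HFI).
  + intros t. apply continuity_pt_filterlim. apply CI.
  + intros t [l0 Hl0]. apply NI. exact (real_nondiff (pI a) (qI a) b lI _ HlI HFI Hbpos Hbinc t l0 Hl0).
- intros HM t0. split; [|split].
  + intros [L [eta [HL [He Hlip]]]]. apply (Gen (pR a) (qR a) (fun t => Cre (f t)) lR t0 HlR HFR (sqrtR a) HM).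
    exists L, eta. split; [exact HL|]. split; [exact He|]. intros t Ht.
    eapply Rle_trans; [|apply Hlip; exact Ht]. exact (Cmod_fst (Csub (f t) (f t0))).
  + apply (Gen (pR a) (qR a) (fun t => Cre (f t)) lR t0 HlR HFR (sqrtR a) HM).
  + apply (Gen (pI a) (qI a) (fun t => Cim (f t)) lI t0 HlI HFI (sqrtI a) HM).
Qed.
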